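(* For any constant $c > 0$, consider RLS-GP with $F = \{\mathrm{AND}, \mathrm{OR}\}$, $L = \{x_1, \ldots, x_n\}$, a tree size limit $\ell \ge n$, using in each iteration a fresh training set of $s = n^c \lg^2 n$ inputs sampled uniformly at random from $\{0,1\}^n$ to evaluate solution quality, and terminating (returning its current solution) when the sampled error of its current solution is at most $c' \lg n$, where $c'$ is an appropriately large constant. For the target $\mathrm{AND}_n$, and likewise for the target $\mathrm{OR}_n$, with probability at least $1 - O(\log^2(n)/n)$ the algorithm terminates within $O(\log n)$ iterations and returns a solution with generalisation error at most $n^{-c}$.
   Context: Programs are finite rooted binary trees (the empty tree is allowed) whose internal nodes are labelled by binary Boolean functions from $F$ and whose leaves are labelled by literals from $L$; a program computes a Boolean function of $(x_1,\dots,x_n)$ in the obvious way. $\mathrm{AND}_n(x) = x_1 \wedge \dots \wedge x_n$, $\mathrm{OR}_n(x) = x_1 \vee \dots \vee x_n$; $h$ denotes the target. The generalisation error of $X$ is $|\{x \in \{0,1\}^n : X(x) \ne h(x)\}|/2^n$. In each iteration a fresh training set of $s$ inputs is drawn independently and uniformly at random from $\{0,1\}^n$; the sampled error $f(X)$ of a program $X$ in that iteration is the number of sampled inputs on which $X$ differs from $h$; parent and offspring are evaluated on the same training set. LeafCount$(X)$ is the number of leaves. HVL-Prime with subtree deletion, applied to a tree $X$: choose $op \in \{\mathrm{INS}, \mathrm{DEL}, \mathrm{SUB}\}$, a literal $l \in L$ and a function $g \in F$, independently and uniformly at random. If $X$ is empty, the result is the single leaf $l$. Otherwise: if $op = \mathrm{INS}$,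 choose a node $x$ of $X$ uniformly at random and replace it by a new node labelled $g$ whose two children are the subtree rooted at $x$ and a new leaf $l$, in uniformly random order; if $op = \mathrm{DEL}$, choose a node $x$ of $X$ (leaf or internal) uniformly at random and replace the parent of $x$ by the sibling of $x$; if $op = \mathrm{SUB}$, choose a leaf of $X$ uniformly at random and replace it by $l$. RLS-GP with tree size limit $\ell$: start with the empty tree $X$; in each iteration let $X' := $ HVL-Prime$(X)$, and if LeafCount$(X') \le \ell$ and $f(X') \le f(X)$ (sampled errors on the current training set) then set $X := X'$. $\lg$ is the base-2 logarithm; asymptotics are as $n \to \infty$. *)

(* Defs.v *)
From Stdlib Require Import Reals List Arith Lia.
Import ListNotations.
Open Scope R_scope.

(* Non-empty trees.  [Node true] = AND, [Node false] = OR  (F = {AND, OR});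
   [Leaf i] = literal x_{i+1}  (L = {x_1,...,x_n}, i < n). *)
Inductive ptree : Type :=
| Leaf (i : nat)
| Node (g : bool) (l r : ptree).

(* A program is a possibly empty tree: [None] is the empty tree. *)
Definition program := option ptree.

(* Inputs are bit lists of length n; x_{i+1} is [nth i x false]. *)
Fixpoint peval (t : ptree) (x : list bool) : bool :=
  match t with
  | Leaf i => nth i x false
  | Node g a b => if g then andb (peval a x) (peval b x)
                  else orb (peval a x) (peval b x)
  end.

Fixpoint nnodes (t : ptree) : nat :=
  match t with Leaf _ => 1%nat | Node _ a b => S (nnodes a + nnodes b) end.

Fixpoint nleaves (t : ptree) : nat :=
  match t with Leaf _ => 1%nat | Node _ a b => (nleaves a + nleaves b)%nat end.

Definition LeafCount (X : program) : nat :=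
  match X with None => 0%nat | Some t => nleaves t end.

(* Nodes are numbered in preorder (root = 0); [modify_at t k f] replaces the
   subtree rooted at node k by [f] of it. *)
Fixpoint modify_at (t : ptree) (k : nat) (f : ptree -> ptree) : ptree :=
  match k with
  | O => f t
  | S k' =>
      match t with
      | Leaf _ => t
      | Node g a b =>
          if Nat.ltb k' (nnodes a) then Node g (modify_at a k' f) b
          else Node g a (modify_at b (k' - nnodes a) f)
      end
  end.

(* Subtree deletion at node k: the parent of node k is replaced by the sibling
   of node k.  Deleting the root (which has no parent) yields the empty tree. *)
Fixpoint del_at (t : ptree) (k : nat) : program :=
  match k with
  | O => None
  | S k' =>
      match t with
      | Leaf _ => Some t
      | Node g a b =>
          if Nat.ltb k' (nnodes a) then
            match del_at a k' with None => Some b | Some a' => Some (Node g a' b) end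
          else
            match del_at b (k' - nnodes a) with None => Some a | Some b' => Some (Node g a b') end
      end
  end.

Fixpoint sub_leaf (t : ptree) (j l : nat) : ptree :=
  match t with
  | Leaf _ => Leaf l
  | Node g a b =>
      if Nat.ltb j (nleaves a) then Node g (sub_leaf a j l) b
      else Node g a (sub_leaf b (j - nleaves a) l)
  end.

Definition dist (A : Type) := list (R * A).
Definition ret {A} (a : A) : dist A := [(1, a)].
Definition bind {A B} (d : dist A) (f : A -> dist B) : dist B :=
  flat_map (fun pa => map (fun qb => (fst pa * fst qb, snd qb)) (f (snd pa))) d.
Definition unif {A} (l : list A) : dist A :=
  map (fun a => (/ INR (length l), a)) l.
Definition prob {A} (d : dist A) (P : A -> bool) : R :=
  fold_right (fun pa acc => if P (snd pa) then fst pa + acc else acc) 0 d.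

(* op: 0 = INS, 1 = DEL, 2 = SUB; literal l uniform in {0..n-1};
   g uniform in {AND, OR}. *)
Definition HVL_Prime (n : nat) (X : program) : dist program :=
  bind (unif [0%nat; 1%nat; 2%nat]) (fun op =>
  bind (unif (seq 0 n)) (fun l =>
  bind (unif [true; false]) (fun g =>
  match X with
  | None => ret (Some (Leaf l))
  | Some t =>
      match op with
      | O => bind (unif (seq 0 (nnodes t))) (fun k =>
             bind (unif [true; false]) (fun side =>
             ret (Some (modify_at t k (fun u =>
                    if side then Node g u (Leaf l) else Node g (Leaf l) u)))))
      | 1%nat => bind (unif (seq 0 (nnodes t))) (fun k => ret (del_at t k))
      | _ => bind (unif (seq 0 (nleaves t))) (fun j => ret (Some (sub_leaf t j l)))
      end
  end))).

Fixpoint all_inputs (n : nat) : list (list bool) :=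
  match n with
  | O => [[]]
  | S m => flat_map (fun v => [true :: v; false :: v]) (all_inputs m)
  end.

Fixpoint training_set (n s : nat) : dist (list (list bool)) :=
  match s with
  | O => ret []
  | S s' => bind (unif (all_inputs n)) (fun x =>
            bind (training_set n s') (fun S => ret (x :: S)))
  end.

Definition AND_n (n : nat) (x : list bool) : bool :=
  forallb (fun i => nth i x false) (seq 0 n).
Definition OR_n (n : nat) (x : list bool) : bool :=
  existsb (fun i => nth i x false) (seq 0 n).

(* Number of inputs in S on which X differs from h.  Convention: the empty
   tree computes no function and counts as wrong on every input. *)
Definition sampled_error (h : list bool -> bool) (X : program)
    (S : list (list bool)) : nat :=
  match X with
  | None => length S
  | Some t => length (filter (fun x => negb (Bool.eqb (peval t x) (h x))) S)
  end.

Definition gen_error (n : nat) (h : list bool -> bool) (X : program) : R :=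
  INR (sampled_error h X (all_inputs n)) / 2 ^ n.

Definition lg (x : R) : R := ln x / ln 2.

Definition ceilR (x : R) : Z := (- Int_part (- x))%Z.

Definition sample_size (n : nat) (c : R) : nat :=
  Z.to_nat (ceilR (Rpower (INR n) c * (lg (INR n)) ^ 2)).

Inductive state : Type :=
| Running (X : program)
| Done (X : program).

Definition rls_step (n ell s : nat) (c' : R) (h : list bool -> bool)
    (st : state) : dist state :=
  match st with
  | Done X => ret (Done X)
  | Running X =>
      bind (training_set n s) (fun S =>
        if Rle_dec (INR (sampled_error h X S)) (c' * lg (INR n)) then ret (Done X)
        else bind (HVL_Prime n X) (fun X' =>
          if andb (Nat.leb (LeafCount X') ell)
                  (Nat.leb (sampled_error h X' S) (sampled_error h X S))
          then ret (Running X') else ret (Running X)))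
  end.

Fixpoint rls_run (n ell s : nat) (c' : R) (h : list bool -> bool) (T : nat)
    : dist state :=
  match T with
  | O => ret (Running None)
  | S T' => bind (rls_run n ell s c' h T') (rls_step n ell s c' h)
  end.

Definition success (n : nat) (c : R) (h : list bool -> bool) (st : state) : bool :=
  match st with
  | Running _ => false
  | Done X => if Rle_dec (gen_error n h X) (Rpower (INR n) (- c)) then true else false
  end.

(* Main.v *)
Require Import Defs.
From Stdlib Require Import Reals Lra Lia List Permutation Arith Bool ListDec ZArith.
Import ListNotations.

From Stdlib Require Import Reals Lra Lia List Permutation Arith.
Import ListNotations.
Open Scope R_scope.

Definition E {A} (d : Defs.dist A) (f : A -> R) : R :=
  fold_right (fun pa acc => fst pa * f (snd pa) + acc) 0 d.
Definition valid {A} (d : Defs.dist A) : Prop := forall pa, In pa d -> 0 <= fst pa.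
Definition sumf {A} (l : list A) (f : A -> R) : R :=
  fold_right (fun a acc => f a + acc) 0 l.

Lemma E_app {A} (d1 d2 : Defs.dist A) f : E (d1 ++ d2) f = E d1 f + E d2 f.
Proof. induction d1 as [|[w a] d1 IH]; simpl; [lra|]. rewrite IH; lra. Qed.

Lemma E_map_scale {A} (d : Defs.dist A) w f :
  E (map (fun qb => (w * fst qb, snd qb)) d) f = w * E d f.
Proof. induction d as [|[v a] d IH]; simpl; [lra|]. rewrite IH; simpl; lra. Qed.

Lemma E_bind {A B} (d : Defs.dist A) (g : A -> Defs.dist B) f :
  E (bind d g) f = E d (fun a => E (g a) f).
Proof.
  induction d as [|[w a] d IH]; simpl; [reflexivity|].
  unfold bind in *. simpl. rewrite E_app, E_map_scale, IH. simpl. reflexivity.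
Qed.

Lemma E_ret {A} (a : A) f : E (ret a) f = f a.
Proof. unfold E, ret; simpl; lra. Qed.

Lemma E_unif {A} (l : list A) f : E (unif l) f = / INR (length l) * sumf l f.
Proof.
  unfold unif. generalize (/ INR (length l)). intro w.
  induction l as [|a l IH]; simpl; [lra|]. unfold E in *; simpl in *. rewrite IH. lra.
Qed.

Lemma E_ext {A} (d : Defs.dist A) f g : (forall a, f a = g a) -> E d f = E d g.
Proof. intro H. induction d as [|[w a] d IH]; simpl; [auto|]. unfold E in *; simpl. rewrite H, IH; auto. Qed.

Lemma E_le {A} (d : Defs.dist A) f g : valid d ->
  (forall pa, In pa d -> f (snd pa) <= g (snd pa)) -> E d f <= E d g.
Proof.
  intros Hv H. induction d as [|[w a] d IH]; simpl; [lra|].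
  unfold E in *; simpl.
  assert (0 <= w) by (apply (Hv (w,a)); left; auto).
  assert (f a <= g a) by (apply (H (w,a)); left; auto).
  assert (fold_right (fun pa acc => fst pa * f (snd pa) + acc) 0 d <=
          fold_right (fun pa acc => fst pa * g (snd pa) + acc) 0 d).
  { apply IH; [intros pa Hp; apply Hv; right; auto|intros pa Hp; apply H; right; auto]. }
  nra.
Qed.

Lemma E_plus {A} (d : Defs.dist A) f g : E d (fun a => f a + g a) = E d f + E d g.
Proof. induction d as [|[w a] d IH]; unfold E in *; simpl; [lra|]. rewrite IH; lra. Qed.

Lemma E_scal {A} (d : Defs.dist A) c f : E d (fun a => c * f a) = c * E d f.
Proof. induction d as [|[w a] d IH]; unfold E in *; simpl; [lra|]. rewrite IH; lra. Qed.

Lemma E_opp {A} (d : Defs.dist A) f : E d (fun a => - f a) = - E d f.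
Proof. induction d as [|[w a] d IH]; unfold E in *; simpl; [lra|]. rewrite IH; lra. Qed.

Lemma E_ext_in {A} (d : Defs.dist A) f g : (forall pa, In pa d -> f (snd pa) = g (snd pa)) -> E d f = E d g.
Proof. intro H. induction d as [|[w a] d IH]; [reflexivity|].
  change (w * f a + E d f = w * g a + E d g).
  pose proof (H (w,a) (or_introl eq_refl)) as H0; simpl in H0; rewrite H0.
  rewrite IH; auto. intros; apply H; right; auto. Qed.

Definition mass {A} (d : Defs.dist A) := E d (fun _ => 1).

Lemma E_const {A} (d : Defs.dist A) c : E d (fun _ => c) = c * mass d.
Proof. unfold mass. rewrite <- E_scal. apply E_ext; intros; lra. Qed.

Lemma E_nonneg {A} (d : Defs.dist A) f : valid d -> (forall a, 0 <= f a) -> 0 <= E d f.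
Proof.
  intros Hv H. replace 0 with (E d (fun _ => 0)).
  - apply E_le; auto.
  - rewrite E_const; lra.
Qed.

Lemma prob_E {A} (d : Defs.dist A) P : prob d P = E d (fun a => if P a then 1 else 0).
Proof. induction d as [|[w a] d IH]; unfold E in *; simpl; [lra|]. rewrite IH. destruct (P a); lra. Qed.

Lemma valid_ret {A} (a : A) : valid (ret a).
Proof. intros pa [H|[]]. subst; simpl; lra. Qed.

Lemma valid_unif {A} (l : list A) : valid (unif l).
Proof.
  intros pa H. unfold unif in H. apply in_map_iff in H. destruct H as [x [<- _]].
  simpl. destruct (length l). simpl. rewrite Rinv_0. lra.
  left. apply Rinv_0_lt_compat. apply lt_0_INR. lia.
Qed.

Lemma valid_bind {A B} (d : Defs.dist A) (g : A -> Defs.dist B) :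
  valid d -> (forall a, valid (g a)) -> valid (bind d g).
Proof.
  intros Hd Hg pa H. unfold bind in H. apply in_flat_map in H.
  destruct H as [[w a] [Hin H]]. apply in_map_iff in H. destruct H as [[v b] [<- Hb]].
  simpl. apply Rmult_le_pos; [apply (Hd _ Hin)|apply (Hg a _ Hb)].
Qed.

Lemma In_bind {A B} (d : Defs.dist A) (g : A -> Defs.dist B) pb :
  In pb (bind d g) -> exists pa, In pa d /\ exists pc, In pc (g (snd pa)) /\ snd pb = snd pc.
Proof.
  intro H. unfold bind in H. apply in_flat_map in H.
  destruct H as [pa [Hin H]]. apply in_map_iff in H. destruct H as [pc [<- Hc]].
  exists pa; split; auto. exists pc; split; auto.
Qed.

Lemma mass_ret {A} (a : A) : mass (ret a) = 1.
Proof. unfold mass; rewrite E_ret; auto. Qed.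

Lemma sumf_const {A} (l : list A) c : sumf l (fun _ => c) = INR (length l) * c.
Proof. induction l; simpl; [lra|]. rewrite IHl. destruct (length l); simpl; lra. Qed.

Lemma mass_unif {A} (l : list A) : l <> [] -> mass (unif l) = 1.
Proof.
  intro H. unfold mass. rewrite E_unif, sumf_const.
  destruct l; [congruence|]. field. apply not_0_INR. simpl; lia.
Qed.

Lemma mass_bind {A B} (d : Defs.dist A) (g : A -> Defs.dist B) :
  valid d -> mass d = 1 -> (forall pa, In pa d -> mass (g (snd pa)) = 1) -> mass (bind d g) = 1.
Proof.
  intros Hv Hm H. unfold mass at 1. rewrite E_bind.
  transitivity (E d (fun _ => 1)); [|exact Hm].
  apply E_ext_in; auto.
Qed.

Lemma E_le_const {A} (d : Defs.dist A) f c : valid d -> mass d = 1 ->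
  (forall pa, In pa d -> f (snd pa) <= c) -> E d f <= c.
Proof.
  intros Hv Hm H. replace c with (E d (fun _ => c)). apply E_le; auto.
  rewrite E_const, Hm; lra.
Qed.

Lemma sumf_le {A} (l : list A) f g : (forall a, In a l -> f a <= g a) -> sumf l f <= sumf l g.
Proof. induction l; simpl; intros; [lra|]. 
  assert (f a <= g a) by auto. assert (sumf l f <= sumf l g) by auto. lra. Qed.

Lemma sumf_plus {A} (l : list A) f g : sumf l (fun a => f a + g a) = sumf l f + sumf l g.
Proof. induction l; simpl; [lra|]. rewrite IHl; lra. Qed.
Lemma sumf_scal {A} (l : list A) c f : sumf l (fun a => c * f a) = c * sumf l f.
Proof. induction l; simpl; [lra|]. rewrite IHl; lra. Qed.
Lemma sumf_ext {A} (l : list A) f g : (forall a, In a l -> f a = g a) -> sumf l f = sumf l g.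
Proof. induction l; simpl; intros; [lra|]. rewrite H, IHl; auto. Qed.

Lemma E_swap {A B} (d1 : Defs.dist A) (d2 : Defs.dist B) f :
  E d1 (fun a => E d2 (fun b => f a b)) = E d2 (fun b => E d1 (fun a => f a b)).
Proof.
  induction d1 as [|[w a] d1 IH].
  - change (0 = E d2 (fun _ => 0)). rewrite E_const; lra.
  - change (w * E d2 (fun b => f a b) + E d1 (fun a => E d2 (fun b => f a b)) =
            E d2 (fun b => w * f a b + E d1 (fun a => f a b))).
    rewrite IH, E_plus, E_scal. reflexivity.
Qed.

Close Scope R_scope.
From Stdlib Require Import Reals Lra Lia List Permutation Arith Bool.
Import ListNotations.

Fixpoint leaves (t : ptree) : list nat :=
  match t with Leaf i => [i] | Node _ a c => leaves a ++ leaves c end.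
Fixpoint mono (b : bool) (t : ptree) : Prop :=
  match t with Leaf _ => True | Node g a c => g = b /\ mono b a /\ mono b c end.

Lemma nleaves_leaves t : nleaves t = length (leaves t).
Proof. induction t; simpl; auto. rewrite length_app; lia. Qed.

Lemma leaves_nonnil t : leaves t <> [].
Proof. induction t; simpl; [discriminate|]. destruct (leaves t1); simpl; [auto|discriminate]. Qed.

Lemma node_b b A C x : peval (Node b A C) x = b <-> peval A x = b /\ peval C x = b.
Proof. simpl. destruct b, (peval A x), (peval C x); simpl; intuition congruence. Qed.

Lemma peval_mono b t x : mono b t ->
  (peval t x = b <-> forall j, In j (leaves t) -> nth j x false = b).
Proof.
  induction t as [i|g a IHa c IHc].
  - intros _. simpl. split; [intros H j [<-|[]]; auto|intro H; apply H; auto].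
  - intros [-> [Ha Hc]]. rewrite node_b. simpl. split.
    + intros [H1 H2] j Hj. apply in_app_or in Hj. destruct Hj.
      * apply (proj1 (IHa Ha) H1); auto.
      * apply (proj1 (IHc Hc) H2); auto.
    + intro H. split; [apply (proj2 (IHa Ha))|apply (proj2 (IHc Hc))]; intros; apply H; apply in_or_app; auto.
Qed.

Definition allb (b : bool) (l : list nat) (x : list bool) : Prop :=
  forall j, In j l -> nth j x false = b.

Lemma allb_app b l1 l2 x : allb b (l1 ++ l2) x <-> allb b l1 x /\ allb b l2 x.
Proof. unfold allb. split.
  - intro H; split; intros; apply H; apply in_or_app; auto.
  - intros [H1 H2] j Hj; apply in_app_or in Hj; destruct Hj; auto. Qed.

Lemma modify_decomp b t k : (k < nnodes t)%nat -> exists u pre suf,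
  leaves t = pre ++ leaves u ++ suf /\ (mono b t -> mono b u) /\
  forall f, leaves (modify_at t k f) = pre ++ leaves (f u) ++ suf /\
    (mono b t -> mono b (f u) -> mono b (modify_at t k f)) /\
    (mono b t -> forall x, peval (modify_at t k f) x = b <->
        (allb b (pre ++ suf) x /\ peval (f u) x = b)).
Proof.
  revert k. induction t as [i|g a IHa c IHc]; intros k Hk.
  - simpl in Hk. assert (k = 0%nat) by lia. subst. exists (Leaf i), [], [].
    split; [simpl; auto|]. split; auto. intro f. simpl. split; [rewrite app_nil_r; auto|].
    split; auto. intros _ x. split; [intro H; split; auto; intros j []|tauto].
  - destruct k as [|k'].
    + exists (Node g a c), [], []. split; [simpl; rewrite app_nil_r; auto|]. split; auto.
      intro f. simpl. split; [rewrite app_nil_r; auto|]. split; auto.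
      intros _ x. split; [intro H; split; auto; intros j []|tauto].
    + simpl in Hk. destruct (Nat.ltb k' (nnodes a)) eqn:E1.
      * pose proof E1 as E1'. apply Nat.ltb_lt in E1'. destruct (IHa k' E1') as [u [pre [suf [H1 [H2 H3]]]]].
        exists u, pre, (suf ++ leaves c). split; [simpl; rewrite H1; repeat rewrite <- app_assoc; auto|].
        split; [intros [_ [Ha _]]; auto|].
        intro f. destruct (H3 f) as [F1 [F2 F3]]. simpl. rewrite E1. split.
        { simpl. rewrite F1. repeat rewrite <- app_assoc. auto. }
        split. { intros [Hg [Ha Hc]] Hf. simpl. auto. }
        intros [Hg [Ha Hc]] x. subst g. rewrite node_b, F3 by auto.
        rewrite (peval_mono b c x Hc). fold (allb b (leaves c) x).
        rewrite app_assoc; repeat rewrite allb_app; tauto.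
      * pose proof E1 as E1'. apply Nat.ltb_ge in E1'. assert (Hk' : (k' - nnodes a < nnodes c)%nat) by lia.
        destruct (IHc _ Hk') as [u [pre [suf [H1 [H2 H3]]]]].
        exists u, (leaves a ++ pre), suf. split; [simpl; rewrite H1; repeat rewrite <- app_assoc; auto|].
        split; [intros [_ [_ Hc]]; auto|].
        intro f. destruct (H3 f) as [F1 [F2 F3]]. simpl. rewrite E1. split.
        { simpl. rewrite F1. repeat rewrite <- app_assoc. auto. }
        split. { intros [Hg [Ha Hc]] Hf. simpl. auto. }
        intros [Hg [Ha Hc]] x. subst g. rewrite node_b, F3 by auto.
        rewrite (peval_mono b a x Ha). fold (allb b (leaves a) x).
        repeat rewrite allb_app; tauto.
Qed.

Lemma del_decomp b t k : (1 <= k)%nat -> (k < nnodes t)%nat -> mono b t ->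
  exists t'' u pre suf, del_at t k = Some t'' /\ leaves t = pre ++ leaves u ++ suf /\
    leaves t'' = pre ++ suf /\ mono b t''.
Proof.
  revert k. induction t as [i|g a IHa c IHc]; intros k H1 Hk Hm.
  - simpl in Hk; lia.
  - destruct k as [|k']; [lia|]. simpl in Hk. destruct Hm as [Hg [Ha Hc]].
    simpl. destruct (Nat.ltb k' (nnodes a)) eqn:E1.
    + apply Nat.ltb_lt in E1. destruct k' as [|k''].
      * replace (del_at a 0) with (@None ptree) by (destruct a; reflexivity). exists c, a, [], (leaves c). repeat split; auto.
      * destruct (IHa (S k'') ltac:(lia) E1 Ha) as [t'' [u [pre [suf [D1 [D2 [D3 D4]]]]]]].
        rewrite D1. exists (Node g t'' c), u, pre, (suf ++ leaves c).
        simpl. rewrite D2, D3. repeat rewrite <- app_assoc. repeat split; auto.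
    + apply Nat.ltb_ge in E1. destruct (Nat.eq_dec (k' - nnodes a) 0) as [E2|E2].
      * rewrite E2. replace (del_at c 0) with (@None ptree) by (destruct c; reflexivity). exists a, c, (leaves a), []. rewrite !app_nil_r. repeat split; auto.
      * destruct (IHc (k' - nnodes a)%nat ltac:(lia) ltac:(lia) Hc) as [t'' [u [pre [suf [D1 [D2 [D3 D4]]]]]]].
        rewrite D1. exists (Node g a t''), u, (leaves a ++ pre), suf.
        simpl. rewrite D2, D3. repeat rewrite <- app_assoc. repeat split; auto.
Qed.

Lemma sub_decomp b t j l : exists pre y suf, leaves t = pre ++ y :: suf /\
  leaves (sub_leaf t j l) = pre ++ l :: suf /\ (mono b t -> mono b (sub_leaf t j l)).
Proof.
  revert j. induction t as [i|g a IHa c IHc]; intro j.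
  - exists [], i, []. simpl. auto.
  - simpl. destruct (Nat.ltb j (nleaves a)).
    + destruct (IHa j) as [pre [y [suf [H1 [H2 H3]]]]].
      exists pre, y, (suf ++ leaves c). simpl. rewrite H1, H2. repeat rewrite <- app_assoc.
      simpl. repeat split; auto; tauto.
    + destruct (IHc (j - nleaves a)%nat) as [pre [y [suf [H1 [H2 H3]]]]].
      exists (leaves a ++ pre), y, suf. simpl. rewrite H1, H2. repeat rewrite <- app_assoc.
      repeat split; auto; tauto.
Qed.

Open Scope R_scope.

From Stdlib Require Import Reals Lra Lia List Permutation Arith Bool.
Import ListNotations.
Open Scope R_scope.

Lemma all_inputs_length n : length (all_inputs n) = (2 ^ n)%nat.
Proof.
  induction n; simpl; auto.
  assert (forall l : list (list bool), length (flat_map (fun v => [true :: v; false :: v]) l) = (2 * length l)%nat).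
  { induction l; simpl; auto. rewrite IHl. lia. }
  rewrite H, IHn. lia.
Qed.

Definition Pin (n : nat) (f : list bool -> R) : R := E (unif (all_inputs n)) f.

Lemma sumf_app {A} (l1 l2 : list A) f : sumf (l1 ++ l2) f = sumf l1 f + sumf l2 f.
Proof. induction l1; simpl; [lra|]. rewrite IHl1; lra. Qed.

Lemma Pin_S m f : Pin (S m) f = / 2 * (Pin m (fun v => f (true :: v)) + Pin m (fun v => f (false :: v))).
Proof.
  unfold Pin. rewrite !E_unif. rewrite all_inputs_length.
  simpl all_inputs. rewrite all_inputs_length.
  assert (sumf (flat_map (fun v => [true :: v; false :: v]) (all_inputs m)) f =
          sumf (all_inputs m) (fun v => f (true :: v)) + sumf (all_inputs m) (fun v => f (false :: v))).
  { induction (all_inputs m); simpl; [lra|]. rewrite IHl. lra. }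
  rewrite H. replace (2 ^ S m)%nat with (2 * 2 ^ m)%nat by (simpl; lia).
  rewrite mult_INR. assert (0 < INR (2 ^ m)) by (apply lt_0_INR; apply Nat.neq_0_lt_0; apply Nat.pow_nonzero; lia).
  simpl (INR 2). field. lra.
Qed.

Lemma Pin_0 f : Pin 0 f = f [].
Proof. unfold Pin. rewrite E_unif. simpl. lra. Qed.

Lemma valid_Pin n : valid (unif (all_inputs n)).
Proof. apply valid_unif. Qed.

Lemma all_inputs_nonnil n : all_inputs n <> [].
Proof. intro H. pose proof (all_inputs_length n). rewrite H in H0. simpl in H0.
  pose proof (Nat.pow_nonzero 2 n). lia. Qed.

Lemma mass_Pin n : mass (unif (all_inputs n)) = 1.
Proof. apply mass_unif, all_inputs_nonnil. Qed.

Lemma Pin_le n f g : (forall x, f x <= g x) -> Pin n f <= Pin n g.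
Proof. intros. apply E_le; auto. apply valid_Pin. Qed.

Definition indb (b : bool) : R := if b then 1 else 0.

Definition okp (o : option bool) (c : bool) : bool :=
  match o with Some v => Bool.eqb c v | None => true end.
Definition matchf (rho : nat -> option bool) (n : nat) (x : list bool) : bool :=
  forallb (fun j => okp (rho j) (nth j x false)) (seq 0 n).
Definition cnt (rho : nat -> option bool) (n : nat) : nat :=
  length (filter (fun j => match rho j with Some _ => true | None => false end) (seq 0 n)).

Lemma forallb_map' {A B} (f : B -> bool) (g : A -> B) l : forallb f (map g l) = forallb (fun a => f (g a)) l.
Proof. induction l; simpl; auto. rewrite IHl; auto. Qed.

Lemma matchf_S rho m c v : matchf rho (S m) (c :: v) = okp (rho 0%nat) c && matchf (fun j => rho (S j)) m v.
Proof.
  unfold matchf. simpl. f_equal. rewrite <- seq_shift, forallb_map'. reflexivity.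
Qed.

Lemma cnt_S rho m : cnt rho (S m) = ((match rho 0%nat with Some _ => 1 | None => 0 end) + cnt (fun j => rho (S j)) m)%nat.
Proof.
  unfold cnt. simpl. rewrite <- seq_shift. rewrite filter_map_swap. rewrite ?length_map.
  destruct (rho 0%nat); simpl; rewrite length_map; reflexivity.
Qed.

Lemma Pin_matchf n : forall rho, Pin n (fun x => indb (matchf rho n x)) = (/ 2) ^ (cnt rho n).
Proof.
  induction n; intro rho.
  - rewrite Pin_0. unfold matchf, cnt. simpl. lra.
  - rewrite Pin_S, cnt_S.
    assert (forall c, Pin n (fun v => indb (matchf rho (S n) (c :: v))) =
              indb (okp (rho 0%nat) c) * (/2) ^ cnt (fun j => rho (S j)) n).
    { intro c. rewrite <- IHn. unfold Pin. rewrite <- E_scal. apply E_ext. intro v.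
      rewrite matchf_S. destruct (okp _ c), (matchf _ n v); simpl; lra. }
    rewrite !H. rewrite pow_add. destruct (rho 0%nat) as [[]|]; simpl; lra.
Qed.

Lemma filter_seq_len (f : nat -> bool) n Q : NoDup Q -> (forall j, In j Q -> (j < n)%nat) ->
  (forall j, (j < n)%nat -> (f j = true <-> In j Q)) -> length (filter f (seq 0 n)) = length Q.
Proof.
  intros HQ Hlt Hf. apply Permutation_length. apply NoDup_Permutation.
  - apply NoDup_filter, seq_NoDup.
  - auto.
  - intro j. rewrite filter_In, in_seq. split.
    + intros [H1 H2]. apply Hf; auto; lia.
    + intro H. pose proof (Hlt j H). split; [lia|]. apply Hf; auto.
Qed.

Lemma matchf_spec rho n x : matchf rho n x = true ->
  forall j v, (j < n)%nat -> rho j = Some v -> nth j x false = v.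
Proof.
  intros H j v Hj Hr. unfold matchf in H. rewrite forallb_forall in H.
  specialize (H j). rewrite in_seq in H. specialize (H ltac:(lia)). rewrite Hr in H.
  simpl in H. apply Bool.eqb_prop in H. auto.
Qed.

Lemma matchf_intro rho n x : (forall j v, (j < n)%nat -> rho j = Some v -> nth j x false = v) ->
  matchf rho n x = true.
Proof.
  intros H. unfold matchf. apply forallb_forall. intros j Hj. rewrite in_seq in Hj.
  destruct (rho j) eqn:E; simpl; auto. rewrite (H j b) by (auto; lia). apply eqb_reflx.
Qed.

Lemma NoDup_lt_length (l : list nat) n : NoDup l -> (forall j, In j l -> (j < n)%nat) -> (length l <= n)%nat.
Proof.
  intros H1 H2. rewrite <- (length_seq n 0). apply NoDup_incl_length; auto.
  intros j Hj. rewrite in_seq. specialize (H2 j Hj). lia.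
Qed.

From Stdlib Require Import Reals Lra Lia List Permutation Arith Bool.
Import ListNotations.
Open Scope R_scope.

Lemma valid_ts n s : valid (training_set n s).
Proof. induction s. apply valid_ret. cbn [training_set]. apply valid_bind. apply valid_unif.
  intro. apply valid_bind; auto. intro; apply valid_ret. Qed.

Lemma mass_ts n s : mass (training_set n s) = 1.
Proof. induction s. exact (mass_ret _). cbn [training_set]. apply mass_bind; [apply valid_unif|apply mass_Pin|].
  intros. apply mass_bind; [apply valid_ts|auto|]. intros; apply mass_ret. Qed.

Lemma ts_len n s : forall pa, In pa (training_set n s) -> length (snd pa) = s.
Proof.
  induction s; simpl; intros pa H.
  - destruct H as [<-|[]]; auto.
  - apply In_bind in H. destruct H as [pb [_ [pc [Hc ->]]]].
    apply In_bind in Hc. destruct Hc as [pd [Hd [pe [[<-|[]] ->]]]]. simpl.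
    rewrite (IHs pd Hd). auto.
Qed.

Lemma ts_mgf n s (P : list bool -> bool) (z : R) :
  E (training_set n s) (fun S => z ^ length (filter P S)) = (Pin n (fun x => if P x then z else 1)) ^ s.
Proof.
  induction s.
  - cbn [training_set]. rewrite E_ret. simpl. auto.
  - cbn [training_set]. rewrite E_bind. rewrite <- tech_pow_Rmult, <- IHs. unfold Pin. rewrite Rmult_comm, <- E_scal. apply E_ext. intro x.
    rewrite E_bind. rewrite Rmult_comm, <- E_scal. apply E_ext. intro S. rewrite E_ret. simpl.
    destruct (P x); simpl; lra.
Qed.

Lemma Pin_mgf n (P : list bool -> bool) z :
  Pin n (fun x => if P x then z else 1) = 1 + (z - 1) * Pin n (fun x => indb (P x)).
Proof.
  unfold Pin. rewrite <- E_scal. replace 1 with (E (unif (all_inputs n)) (fun _ => 1)) at 1.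
  2:{ apply mass_Pin. } rewrite <- E_plus. apply E_ext. intro x. unfold indb. destruct (P x); lra.
Qed.

Lemma Pin_ind_bounds n P : 0 <= Pin n (fun x => indb (P x)) <= 1.
Proof.
  split.
  - apply E_nonneg. apply valid_Pin. intro; unfold indb; destruct (P a); lra.
  - replace 1 with (Pin n (fun _ => 1)) by apply mass_Pin. apply Pin_le. intro; unfold indb; destruct (P x); lra.
Qed.

From Stdlib Require Import Reals Lra Lia List Permutation Arith Bool.
Import ListNotations.
Open Scope R_scope.

Lemma exp_le x y : x <= y -> exp x <= exp y.
Proof. intro H. destruct (Req_dec x y). subst; lra. left; apply exp_increasing; lra. Qed.

Lemma exp_pow x k : exp x ^ k = exp (INR k * x).
Proof. induction k; simpl. rewrite Rmult_0_l, exp_0; auto.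
  rewrite IHk. rewrite <- exp_plus. f_equal. destruct k; simpl; lra. Qed.

Lemma pow_le_exp y k : 0 <= 1 + y -> (1 + y) ^ k <= exp (INR k * y).
Proof. intro H. rewrite <- exp_pow. apply pow_incr. split; auto. apply exp_ineq1_le. Qed.

Definition qP n (P : list bool -> bool) := Pin n (fun x => indb (P x)).
Definition cntS (P : list bool -> bool) (S : list (list bool)) := length (filter P S).

Lemma tail_zero n s P :
  E (training_set n s) (fun S => indb (Nat.eqb (cntS P S) 0)) <= exp (- (INR s * qP n P)).
Proof.
  replace (E (training_set n s) (fun S => indb (Nat.eqb (cntS P S) 0)))
     with (E (training_set n s) (fun S => 0 ^ length (filter P S))).
  2:{ apply E_ext. intro S. unfold cntS. destruct (length (filter P S)); simpl; unfold indb; simpl; lra. }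
  rewrite ts_mgf, Pin_mgf. fold (qP n P). pose proof (Pin_ind_bounds n P). fold (qP n P) in H.
  replace (1 + (0 - 1) * qP n P) with (1 + - qP n P) by lra.
  replace (- (INR s * qP n P)) with (INR s * - qP n P) by lra.
  apply pow_le_exp. lra.
Qed.

Lemma tail_upper n s P a :
  E (training_set n s) (fun S => if Rle_dec (INR (cntS P S)) a then 0 else 1)
    <= exp (2 * INR s * qP n P - a).
Proof.
  apply Rle_trans with (E (training_set n s) (fun S => exp (- a) * exp 1 ^ length (filter P S))).
  { apply E_le. apply valid_ts. intros [w S] _. simpl. rewrite exp_pow, <- exp_plus.
    destruct (Rle_dec _ _). left; apply exp_pos. unfold cntS in n0.
    apply Rle_trans with (exp 0); [rewrite exp_0; lra| apply exp_le; lra]. }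
  rewrite E_scal, ts_mgf, Pin_mgf. fold (qP n P). pose proof (Pin_ind_bounds n P). fold (qP n P) in H.
  pose proof exp_le_3. pose proof (exp_ineq1_le 1).
  apply Rle_trans with (exp (- a) * exp (INR s * (2 * qP n P))).
  { apply Rmult_le_compat_l. left; apply exp_pos.
    apply Rle_trans with ((1 + 2 * qP n P) ^ s). apply pow_incr. nra.
    apply pow_le_exp. lra. }
  rewrite <- exp_plus. apply exp_le. lra.
Qed.

Lemma tail_lower n s P a :
  E (training_set n s) (fun S => if Rle_dec (INR (cntS P S)) a then 1 else 0)
    <= exp (a - INR s * qP n P / 2).
Proof.
  apply Rle_trans with (E (training_set n s) (fun S => exp a * exp (-1) ^ length (filter P S))).
  { apply E_le. apply valid_ts. intros [w S] _. simpl. rewrite exp_pow, <- exp_plus.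
    destruct (Rle_dec _ _).
    - unfold cntS in r. apply Rle_trans with (exp 0); [rewrite exp_0; lra| apply exp_le; lra].
    - left; apply exp_pos. }
  rewrite E_scal, ts_mgf, Pin_mgf. fold (qP n P). pose proof (Pin_ind_bounds n P). fold (qP n P) in H.
  assert (exp (-1) <= / 2).
  { replace (-1) with (- (1)) by lra. rewrite exp_Ropp. apply Rinv_le_contravar. lra. pose proof (exp_ineq1_le 1). lra. }
  assert (0 < exp (-1)) by apply exp_pos.
  apply Rle_trans with (exp a * exp (INR s * (- qP n P / 2))).
  { apply Rmult_le_compat_l. left; apply exp_pos.
    apply Rle_trans with ((1 + - qP n P / 2) ^ s). apply pow_incr. nra.
    apply pow_le_exp. lra. }
  rewrite <- exp_plus. apply exp_le. lra.
Qed.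

From Stdlib Require Import Reals Lra Lia List Permutation Arith Bool ListDec.
Import ListNotations.
Open Scope R_scope.

Definition hb (b : bool) (n : nat) : list bool -> bool := if b then AND_n n else OR_n n.

Lemma existsb_false {A} (f : A -> bool) l : existsb f l = false <-> forall x, In x l -> f x = false.
Proof. induction l; simpl. split; auto; intros _ _ []. rewrite orb_false_iff, IHl.
  split. intros [H1 H2] x [<-|H]; auto. intro H. split; auto. Qed.

Lemma hb_spec b n x : hb b n x = b <-> forall j, (j < n)%nat -> nth j x false = b.
Proof.
  destruct b; unfold hb, AND_n, OR_n.
  - rewrite forallb_forall. split; intros H j Hj; apply H; rewrite in_seq in *; lia.
  - rewrite existsb_false. split; intros H j Hj; apply H; rewrite in_seq in *; lia.
Qed.

Definition errf (h : list bool -> bool) (X : program) (x : list bool) : bool :=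
  match X with None => true | Some t => negb (Bool.eqb (peval t x) (h x)) end.

Lemma filter_true {A} (l : list A) : filter (fun _ => true) l = l.
Proof. induction l; simpl; f_equal; auto. Qed.

Lemma sampled_error_eq h X S : sampled_error h X S = cntS (errf h X) S.
Proof. destruct X; unfold cntS; simpl; auto. rewrite filter_true; auto. Qed.

Lemma sumf_indb {A} (l : list A) P : sumf l (fun x => indb (P x)) = INR (length (filter P l)).
Proof. induction l; simpl; auto. rewrite IHl. unfold indb. destruct (P a); simpl; auto.
  destruct (length (filter P l)); simpl; lra. lra. Qed.

Lemma gen_error_eq n h X : gen_error n h X = qP n (errf h X).
Proof.
  unfold gen_error, qP, Pin. rewrite E_unif, sumf_indb, sampled_error_eq, all_inputs_length.
  unfold cntS. rewrite pow_INR. simpl (INR 2). unfold Rdiv. apply Rmult_comm.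
Qed.

Fixpoint monob (b : bool) (t : ptree) : bool :=
  match t with Leaf _ => true | Node g a c => Bool.eqb g b && monob b a && monob b c end.
Lemma monob_spec b t : monob b t = true <-> mono b t.
Proof. induction t; simpl. tauto. rewrite !andb_true_iff, IHt1, IHt2.
  split. intros [[H1 H2] H3]. apply Bool.eqb_prop in H1. auto.
  intros [-> [H2 H3]]. rewrite eqb_reflx. auto. Qed.

Definition cls (b : bool) (n : nat) (t : ptree) : Prop :=
  mono b t /\ NoDup (leaves t) /\ forall j, In j (leaves t) -> (j < n)%nat.

Definition clsb (b : bool) (n : nat) (t : ptree) : bool :=
  monob b t && (if NoDup_dec Nat.eq_dec (leaves t) then true else false) &&
  forallb (fun j => Nat.ltb j n) (leaves t).

Lemma clsb_spec b n t : clsb b n t = true <-> cls b n t.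
Proof.
  unfold clsb, cls. rewrite !andb_true_iff, monob_spec, forallb_forall.
  destruct (NoDup_dec Nat.eq_dec (leaves t)).
  - split. intros [[H1 _] H3]. repeat split; auto. intros j Hj. apply Nat.ltb_lt; auto.
    intros [H1 [_ H3]]. repeat split; auto. intros j Hj. apply Nat.ltb_lt; auto.
  - split. intros [[_ H] _]. discriminate. intros [_ [H _]]. contradiction.
Qed.

Lemma class_peval_h b n t x : cls b n t -> hb b n x = b -> peval t x = b.
Proof.
  intros [Hm [_ Hl]] Hh. apply (peval_mono b t x Hm). intros j Hj.
  apply (proj1 (hb_spec b n x) Hh). auto.
Qed.

Lemma err_class b n t x : cls b n t ->
  (errf (hb b n) (Some t) x = true <-> peval t x = b /\ hb b n x = negb b).
Proof.
  intro Hc. simpl. pose proof (class_peval_h b n t x Hc).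
  destruct (peval t x), (hb b n x), b; simpl in *; split; intuition congruence.
Qed.

Lemma cntS_mono (P Q : list bool -> bool) S : (forall x, P x = true -> Q x = true) -> (cntS P S <= cntS Q S)%nat.
Proof. intro H. unfold cntS. induction S; simpl; auto. specialize (H a).
  destruct (P a), (Q a); simpl; try lia; discriminate (H eq_refl). Qed.

Lemma acc_lemma h X X' W S :
  (forall x, errf h X x = true -> errf h X' x = true) ->
  (forall x, W x = true -> errf h X' x = true /\ errf h X x = false) ->
  (cntS (errf h X) S + cntS W S <= cntS (errf h X') S)%nat.
Proof.
  intros H1 H2. unfold cntS. induction S as [|x S IH]; simpl; auto.
  specialize (H1 x). specialize (H2 x).
  destruct (errf h X x), (W x), (errf h X' x); simpl; try lia;
   first [destruct (H2 eq_refl); discriminate | discriminate (H1 eq_refl)].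
Qed.

Definition rhoD (b : bool) (D : list nat) (j : nat) : option bool :=
  if in_dec Nat.eq_dec j D then Some b else None.

Lemma cnt_list rho n Q : NoDup Q -> (forall j, In j Q -> (j < n)%nat) ->
  (forall j, (j < n)%nat -> (rho j <> None <-> In j Q)) -> cnt rho n = length Q.
Proof.
  intros H1 H2 H3. unfold cnt. apply filter_seq_len; auto. intros j Hj. rewrite <- H3 by auto.
  destruct (rho j); split; congruence.
Qed.

Lemma q_class_le b n t : cls b n t -> qP n (errf (hb b n) (Some t)) <= (/2) ^ (nleaves t).
Proof.
  intro Hc. rewrite nleaves_leaves. pose proof Hc as [Hm [Hnd Hl]].
  rewrite <- (cnt_list (rhoD b (leaves t)) n (leaves t)); auto.
  2:{ intros j _. unfold rhoD. destruct (in_dec _ j _); split; congruence. }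
  rewrite <- Pin_matchf. unfold qP. apply Pin_le. intro x. unfold indb.
  destruct (errf _ _ x) eqn:E1; [|destruct (matchf _ _ _); lra].
  rewrite matchf_intro; [lra|]. intros j v Hj. unfold rhoD. destruct (in_dec _ _ _); [|discriminate].
  intro Hv; injection Hv; intros <-. pose proof (proj1 (err_class b n t x Hc) E1) as [E2 _].
  exact (proj1 (peval_mono b t x Hm) E2 j i).
Qed.

Lemma pow_half_le m m' : (m <= m')%nat -> (/2) ^ m' <= (/2) ^ m.
Proof. intro H. replace m' with (m + (m' - m))%nat by lia. rewrite pow_add.
  assert (0 < (/2)^m) by (apply pow_lt; lra). assert ((/2)^(m'-m) <= 1). { destruct (m' - m)%nat. simpl; lra. left. apply pow_lt_1_compat. lra. lia. } nra. Qed.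

Lemma NoDup_mid {A} (pre mid suf : list A) : NoDup (pre ++ mid ++ suf) -> NoDup (pre ++ suf) /\ (forall a, In a mid -> ~ In a (pre ++ suf)).
Proof.
  intro H. assert (Hp : Permutation (pre ++ mid ++ suf) (mid ++ pre ++ suf)).
  { rewrite app_assoc. rewrite (Permutation_app_comm pre mid). rewrite <- app_assoc. auto. }
  apply (Permutation_NoDup Hp) in H. split. eapply NoDup_app_remove_l; eauto.
  intros a Ha. clear Hp. induction mid; [destruct Ha|]. simpl in H. inversion H; subst.
  destruct Ha as [<-|Ha]; auto. intro; apply H2; apply in_or_app; auto.
Qed.

Lemma W_helper b n t pre u suf (L : list nat) : cls b n t -> leaves t = pre ++ leaves u ++ suf ->
  NoDup L -> (forall j, In j L -> (j < n)%nat /\ ~ In j (leaves t)) ->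
  exists W : list bool -> bool, qP n W = (/2) ^ (1 + length L + length pre + length suf) /\
    forall x, W x = true -> errf (hb b n) (Some t) x = false /\ allb b (L ++ pre ++ suf) x /\
                            hb b n x = negb b.
Proof.
  intros Hc Hd HL HLn. destruct Hc as [Hm [Hnd Hlt]].
  destruct (leaves u) as [|i0 rest] eqn:Eu; [destruct (leaves_nonnil u Eu)|].
  assert (Hi0 : In i0 (leaves t)) by (rewrite Hd; apply in_or_app; right; left; auto).
  rewrite Hd in Hnd. destruct (NoDup_mid _ _ _ Hnd) as [Hnd2 Hni].
  specialize (Hni i0 (or_introl eq_refl)).
  set (rho := fun j => if Nat.eqb j i0 then Some (negb b) else
                if in_dec Nat.eq_dec j (L ++ pre ++ suf) then Some b else None).
  exists (matchf rho n). split.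
  - unfold qP. rewrite Pin_matchf. f_equal.
    rewrite (cnt_list rho n (i0 :: L ++ pre ++ suf)).
    + simpl. rewrite !length_app. lia.
    + constructor. rewrite in_app_iff. intros [H|H]; [apply (proj2 (HLn i0 H)); auto|auto].
      apply NoDup_app; auto. intros a Ha Ha'. apply (proj2 (HLn a Ha)). rewrite Hd.
      rewrite in_app_iff in *. rewrite in_app_iff. tauto.
    + intros j [<-|Hj]. apply Hlt; auto. rewrite in_app_iff in Hj. destruct Hj as [Hj|Hj].
      apply (HLn j Hj). apply Hlt. rewrite Hd. rewrite in_app_iff in *. rewrite in_app_iff. tauto.
    + intros j _. unfold rho. destruct (Nat.eqb_spec j i0). subst. split; [left; auto|congruence].
      destruct (in_dec _ _ _); split; try congruence. intros _; right; auto. intros [H|H]; [congruence|contradiction].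
  - intros x Hx. pose proof (matchf_spec rho n x Hx) as Hs.
    assert (Hx0 : nth i0 x false = negb b).
    { apply Hs; [apply Hlt; auto|]. unfold rho. rewrite Nat.eqb_refl; auto. }
    assert (Hall : allb b (L ++ pre ++ suf) x).
    { intros j Hj. apply Hs. rewrite in_app_iff in Hj. destruct Hj as [Hj|Hj].
      apply (HLn j Hj). apply Hlt. rewrite Hd. rewrite in_app_iff in *. rewrite in_app_iff. tauto.
      unfold rho. destruct (Nat.eqb_spec j i0). subst. exfalso. rewrite in_app_iff in Hj. destruct Hj as [Hj|Hj].
      apply (proj2 (HLn i0 Hj)); auto. auto.
      destruct (in_dec _ _ _); [auto|contradiction]. }
    assert (Hh : hb b n x = negb b).
    { destruct (hb b n x) eqn:E1; destruct b; simpl; auto;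
      pose proof (proj1 (hb_spec _ n x) E1 i0 (Hlt i0 Hi0)); rewrite Hx0 in H; discriminate. }
    assert (Ht : peval t x = negb b).
    { destruct (peval t x) eqn:E1; destruct b; simpl; auto;
      pose proof (proj1 (peval_mono _ t x Hm) E1 i0 Hi0); rewrite Hx0 in H; discriminate. }
    split; [|split; auto]. simpl. rewrite Ht, Hh. rewrite eqb_reflx. auto.
Qed.

Definition insf (g : bool) (l : nat) (side : bool) : ptree -> ptree :=
  fun u => if side then Node g u (Leaf l) else Node g (Leaf l) u.

Lemma ins_prog b n t k' l side : cls b n t -> ~ In l (leaves t) -> (l < n)%nat -> (k' < nnodes t)%nat ->
  let t' := modify_at t k' (insf b l side) in
  cls b n t' /\ nleaves t' = S (nleaves t) /\
  forall x, errf (hb b n) (Some t') x = true -> errf (hb b n) (Some t) x = true.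
Proof.
  intros Hc Hl Hln Hk t'. pose proof Hc as [Hm [Hnd Hlt]].
  destruct (modify_decomp b t k' Hk) as [u [pre [suf [H1 [H2 H3]]]]].
  destruct (H3 (insf b l side)) as [F1 [F2 F3]].
  assert (Hp : Permutation (leaves t') (l :: leaves t)).
  { unfold t'. rewrite F1, H1. unfold insf; destruct side; cbn [leaves].
    - replace (pre ++ (leaves u ++ [l]) ++ suf) with ((pre ++ leaves u) ++ l :: suf) by (rewrite <- !app_assoc; reflexivity).
      rewrite (app_assoc pre (leaves u) suf). apply Permutation_sym, Permutation_middle.
    - apply Permutation_sym, Permutation_middle. }
  assert (Hmu : mono b (insf b l side u)) by (unfold insf; destruct side; simpl; auto).
  split; [|split].
  - split; [|split].
    + apply F2; auto.
    + apply (Permutation_NoDup (Permutation_sym Hp)). constructor; auto.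
    + intros j Hj. apply (Permutation_in _ Hp) in Hj. destruct Hj as [<-|Hj]; auto.
  - rewrite !nleaves_leaves. rewrite (Permutation_length Hp). auto.
  - intros x Hx. apply (err_class b n t x Hc).
    assert (Hc' : cls b n t').
    { split; [apply F2; auto|split].
      apply (Permutation_NoDup (Permutation_sym Hp)). constructor; auto.
      intros j Hj. apply (Permutation_in _ Hp) in Hj. destruct Hj as [<-|Hj]; auto. }
    apply (err_class b n t' x Hc') in Hx. destruct Hx as [Hx Hh]. split; auto.
    apply (F3 Hm x) in Hx. destruct Hx as [Ha Hf].
    assert (Hu : peval u x = b).
    { unfold insf in Hf; destruct side; apply node_b in Hf; tauto. }
    apply (peval_mono b t x Hm). rewrite H1. fold (allb b (pre ++ leaves u ++ suf) x).
    apply (allb_app b pre suf x) in Ha. destruct Ha.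
    apply allb_app; split; auto. apply allb_app; split; auto.
    exact (proj1 (peval_mono b u x (H2 Hm)) Hu).
Qed.

Lemma node_nb b A C x : peval (Node (negb b) A C) x = b <-> peval A x = b \/ peval C x = b.
Proof. simpl. destruct b, (peval A x), (peval C x); simpl; intuition congruence. Qed.

Lemma ins_or b n t k' l side : cls b n t -> ~ In l (leaves t) -> (l < n)%nat -> (k' < nnodes t)%nat ->
  let X' := Some (modify_at t k' (insf (negb b) l side)) in
  exists W, (/2) ^ (S (nleaves t)) <= qP n W /\
   (forall x, errf (hb b n) (Some t) x = true -> errf (hb b n) X' x = true) /\
   (forall x, W x = true -> errf (hb b n) X' x = true /\ errf (hb b n) (Some t) x = false).
Proof.
  intros Hc Hl Hln Hk X'. pose proof Hc as [Hm [Hnd Hlt]].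
  destruct (modify_decomp b t k' Hk) as [u [pre [suf [H1 [H2 H3]]]]].
  destruct (H3 (insf (negb b) l side)) as [F1 [F2 F3]].
  assert (Herr' : forall x, peval (modify_at t k' (insf (negb b) l side)) x = b -> hb b n x = negb b ->
     errf (hb b n) X' x = true).
  { intros x E1 E2. unfold X'. simpl. rewrite E1, E2. destruct b; auto. }
  destruct (W_helper b n t pre u suf [l] Hc H1) as [W [HW1 HW2]].
  { constructor; auto. constructor. }
  { intros j [<-|[]]; auto. }
  exists W. split; [|split].
  - rewrite HW1. apply pow_half_le. rewrite nleaves_leaves, H1, !length_app. simpl.
    pose proof (leaves_nonnil u). destruct (leaves u); [congruence|simpl; lia].
  - intros x Hx. apply (err_class b n t x Hc) in Hx. destruct Hx as [Hx Hh]. apply Herr'; auto.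
    apply (F3 Hm x). pose proof (proj1 (peval_mono b t x Hm) Hx) as HHH; clear Hx; rename HHH into Hx. rewrite H1 in Hx. fold (allb b (pre ++ leaves u ++ suf) x) in Hx.
    apply allb_app in Hx. destruct Hx as [Hx1 Hx2]. apply allb_app in Hx2. destruct Hx2 as [Hx2 Hx3].
    split. apply allb_app; auto.
    unfold insf; destruct side; apply node_nb; [left|right]; apply (peval_mono b u x (H2 Hm)); auto.
  - intros x Hx. destruct (HW2 x Hx) as [E1 [E2 E3]]. split; auto. apply Herr'; auto.
    apply (F3 Hm x). apply allb_app in E2. destruct E2 as [E2 E4]. split; auto.
    assert (nth l x false = b) by (apply E2; left; auto).
    unfold insf; destruct side; apply node_nb; [right|left]; simpl; auto.
Qed.

Lemma del_lem b n t k' : cls b n t -> (k' < nnodes t)%nat ->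
  let X' := del_at t k' in
  exists W, (/2) ^ (S (nleaves t)) <= qP n W /\
   (forall x, errf (hb b n) (Some t) x = true -> errf (hb b n) X' x = true) /\
   (forall x, W x = true -> errf (hb b n) X' x = true /\ errf (hb b n) (Some t) x = false).
Proof.
  intros Hc Hk X'. pose proof Hc as [Hm [Hnd Hlt]].
  destruct k' as [|k''].
  - assert (HX : X' = None) by (unfold X'; destruct t; reflexivity). rewrite HX.
    destruct (W_helper b n t [] t [] [] Hc) as [W [HW1 HW2]]; [simpl; rewrite app_nil_r; auto|constructor|intros _ []|].
    exists W. split; [|split]; auto.
    + rewrite HW1. apply pow_half_le. simpl. lia.
    + intros x Hx. destruct (HW2 x Hx) as [E1 _]. auto.
  - destruct (del_decomp b t (S k'') ltac:(lia) Hk Hm) as [t'' [u [pre [suf [D1 [D2 [D3 D4]]]]]]].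
    assert (HX : X' = Some t'') by auto. rewrite HX.
    assert (Herr' : forall x, allb b (pre ++ suf) x -> hb b n x = negb b -> errf (hb b n) (Some t'') x = true).
    { intros x E1 E2. simpl. rewrite E2. rewrite (proj2 (peval_mono b t'' x D4)). destruct b; auto.
      rewrite D3; auto. }
    destruct (W_helper b n t pre u suf [] Hc D2) as [W [HW1 HW2]]; [constructor|intros _ []|].
    exists W. split; [|split].
    + rewrite HW1. apply pow_half_le. rewrite nleaves_leaves, D2, !length_app. simpl.
      pose proof (leaves_nonnil u). destruct (leaves u); [congruence|simpl; lia].
    + intros x Hx. apply (err_class b n t x Hc) in Hx. destruct Hx as [Hx Hh]. apply Herr'; auto.
      pose proof (proj1 (peval_mono b t x Hm) Hx) as HHH; clear Hx; rename HHH into Hx. rewrite D2 in Hx. fold (allb b (pre ++ leaves u ++ suf) x) in Hx.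
      apply allb_app in Hx. destruct Hx as [Hx1 Hx2]. apply allb_app in Hx2. destruct Hx2 as [Hx2 Hx3].
      apply allb_app; auto.
    + intros x Hx. destruct (HW2 x Hx) as [E1 [E2 E3]]. split; auto.
Qed.

Lemma sub_lem b n t j l : cls b n t -> ~ In l (leaves t) -> (l < n)%nat ->
  cls b n (sub_leaf t j l) /\ nleaves (sub_leaf t j l) = nleaves t.
Proof.
  intros [Hm [Hnd Hlt]] Hl Hln. destruct (sub_decomp b t j l) as [pre [y [suf [H1 [H2 H3]]]]].
  rewrite H1 in Hnd. destruct (NoDup_remove _ _ _ Hnd) as [Hnd2 _].
  split; [split; [auto|split]|].
  - rewrite H2. apply (Permutation_NoDup (Permutation_middle _ _ _)). constructor; auto.
    intro H. apply Hl. rewrite H1. rewrite in_app_iff in *. simpl. tauto.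
  - intros i Hi. rewrite H2 in Hi. rewrite in_app_iff in Hi. simpl in Hi.
    destruct Hi as [Hi|[<-|Hi]]; auto; apply Hlt; rewrite H1; rewrite in_app_iff; simpl; tauto.
  - rewrite !nleaves_leaves, H1, H2, !length_app. auto.
Qed.

From Stdlib Require Import Reals Lra Lia List Permutation Arith Bool ListDec.
Import ListNotations.
Open Scope R_scope.

Lemma valid_HVL n X : valid (HVL_Prime n X).
Proof.
  unfold HVL_Prime. repeat (apply valid_bind; [apply valid_unif|intro]).
  destruct X as [t|]; [|apply valid_ret].
  destruct a as [|[|]].
  - repeat (apply valid_bind; [apply valid_unif|intro]). apply valid_ret.
  - apply valid_bind; [apply valid_unif|intro]. apply valid_ret.
  - apply valid_bind; [apply valid_unif|intro]. apply valid_ret.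
Qed.

Lemma seq_nonnil m : (1 <= m)%nat -> seq 0 m <> [].
Proof. destruct m; [lia|]. simpl; discriminate. Qed.

Lemma nnodes_pos t : (1 <= nnodes t)%nat.
Proof. destruct t; simpl; lia. Qed.
Lemma nleaves_pos t : (1 <= nleaves t)%nat.
Proof. rewrite nleaves_leaves. pose proof (leaves_nonnil t). destruct (leaves t); [congruence|simpl; lia]. Qed.

Lemma mass_HVL n X : (1 <= n)%nat -> mass (HVL_Prime n X) = 1.
Proof.
  intro Hn. unfold HVL_Prime.
  apply mass_bind; [apply valid_unif|apply mass_unif; discriminate|intros [w op] _; cbn [snd]].
  apply mass_bind; [apply valid_unif|apply mass_unif, seq_nonnil; auto|intros [w' l] _; cbn [snd]].
  apply mass_bind; [apply valid_unif|apply mass_unif; discriminate|intros [w'' g] _; cbn [snd]].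
  destruct X as [t|]; [|apply mass_ret].
  destruct op as [|[|]].
  - apply mass_bind; [apply valid_unif|apply mass_unif, seq_nonnil, nnodes_pos|intros; cbn [snd]].
    apply mass_bind; [apply valid_unif|apply mass_unif; discriminate|intros; apply mass_ret].
  - apply mass_bind; [apply valid_unif|apply mass_unif, seq_nonnil, nnodes_pos|intros; apply mass_ret].
  - apply mass_bind; [apply valid_unif|apply mass_unif, seq_nonnil, nleaves_pos|intros; apply mass_ret].
Qed.

Definition accst (n ell : nat) (h : list bool -> bool) (X X' : program) (S : list (list bool)) : state :=
  if andb (Nat.leb (LeafCount X') ell) (Nat.leb (sampled_error h X' S) (sampled_error h X S))
  then Running X' else Running X.

Lemma rls_step_E n ell s c' h X f :
  E (rls_step n ell s c' h (Running X)) f =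
  E (training_set n s) (fun S =>
    if Rle_dec (INR (sampled_error h X S)) (c' * lg (INR n)) then f (Done X)
    else E (HVL_Prime n X) (fun X' => f (accst n ell h X X' S))).
Proof.
  unfold rls_step. rewrite E_bind. apply E_ext. intro S.
  destruct (Rle_dec _ _). apply E_ret. rewrite E_bind. apply E_ext. intro X'.
  unfold accst. destruct (andb _ _); apply E_ret.
Qed.

Lemma valid_step n ell s c' h st : valid (rls_step n ell s c' h st).
Proof.
  destruct st; simpl; [|apply valid_ret]. apply valid_bind; [apply valid_ts|intro S].
  destruct (Rle_dec _ _); [apply valid_ret|]. apply valid_bind; [apply valid_HVL|intro X'].
  destruct (andb _ _); apply valid_ret.
Qed.

Lemma mass_step n ell s c' h st : (1 <= n)%nat -> mass (rls_step n ell s c' h st) = 1.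
Proof.
  intro Hn. destruct st; cbn [rls_step]; [|apply mass_ret].
  apply mass_bind; [apply valid_ts|apply mass_ts|intros [w S] _; cbn [snd]].
  destruct (Rle_dec _ _); [apply mass_ret|].
  apply mass_bind; [apply valid_HVL|apply mass_HVL; auto|intros [w' X'] _; cbn [snd]].
  destruct (andb _ _); apply mass_ret.
Qed.

Lemma valid_run n ell s c' h T : valid (rls_run n ell s c' h T).
Proof. induction T. apply valid_ret. cbn [rls_run]. apply valid_bind; auto. intro; apply valid_step. Qed.

Lemma mass_run n ell s c' h T : (1 <= n)%nat -> mass (rls_run n ell s c' h T) = 1.
Proof. intro Hn. induction T. exact (mass_ret _). cbn [rls_run]. apply mass_bind; auto. apply valid_run.
  intros; apply mass_step; auto. Qed.

Lemma run_bound n ell s c' h (V : nat -> state -> R) :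
  (forall m st, E (rls_step n ell s c' h st) (V m) <= V (S m) st) ->
  forall t m, E (rls_run n ell s c' h t) (V m) <= V (m + t)%nat (Running None).
Proof.
  intros Hs t. induction t; intro m.
  - cbn [rls_run]. rewrite E_ret. rewrite Nat.add_0_r. lra.
  - cbn [rls_run]. rewrite E_bind. apply Rle_trans with (E (rls_run n ell s c' h t) (V (S m))).
    + apply E_le. apply valid_run. intros; apply Hs.
    + replace (m + S t)%nat with (S m + t)%nat by lia. apply IHt.
Qed.

From Stdlib Require Import Reals Lra Lia List Permutation Arith Bool ListDec.
Import ListNotations.
Open Scope R_scope.

Definition gam : R := 23 / 24.

Definition Wf (bb : R) (ks t k : nat) : R := Rmin 1 (INR t * bb + gam ^ t * 2 ^ (ks - k)).

Definition Vf (n : nat) (c : R) (b : bool) (ks : nat) (bb : R) (t : nat) (st : state) : R :=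
  match st with
  | Done X => if success n c (hb b n) (Done X) then 0 else 1
  | Running None => match t with O => 1 | S t' => Wf bb ks t' 1 end
  | Running (Some tr) => if clsb b n tr then Wf bb ks t (nleaves tr) else 1
  end.

Lemma E_HVL_Some n t F : E (HVL_Prime n (Some t)) F =
  E (unif [0;1;2]%nat) (fun op => E (unif (seq 0 n)) (fun l => E (unif [true;false]) (fun g =>
    match op with
    | O => E (unif (seq 0 (nnodes t))) (fun k => E (unif [true;false]) (fun side => F (Some (modify_at t k (insf g l side)))))
    | 1%nat => E (unif (seq 0 (nnodes t))) (fun k => F (del_at t k))
    | _ => E (unif (seq 0 (nleaves t))) (fun j => F (Some (sub_leaf t j l)))
    end))).
Proof.
  unfold HVL_Prime. rewrite E_bind. apply E_ext. intro op. rewrite E_bind. apply E_ext. intro l.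
  rewrite E_bind. apply E_ext. intro g.
  destruct op as [|[|]]; rewrite E_bind; apply E_ext; intro k.
  - rewrite E_bind. apply E_ext. intro side. rewrite E_ret. reflexivity.
  - apply E_ret.
  - apply E_ret.
Qed.

Lemma E_HVL_None n F : (1 <= n)%nat -> (forall l, (l < n)%nat -> F (Some (Leaf l)) <= 1 * F (Some (Leaf 0))) -> True.
Proof. auto. Qed.

Lemma In_unif {A} (l : list A) pa : In pa (unif l) -> In (snd pa) l.
Proof. unfold unif. intro H. apply in_map_iff in H. destruct H as [x [<- H]]. auto. Qed.

Section Main.
Variables (n ell s : nat) (c c' : R) (b : bool) (ks : nat) (bb : R).
Local Notation aa := (c' * lg (INR n)).
Local Notation V := (Vf n c b ks bb).
Local Notation h := (hb b n).

Hypothesis Hn1 : (1 <= n)%nat.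
Hypothesis Hell : (n <= ell)%nat.
Hypothesis Ha1 : 1 <= aa.
Hypothesis Hsa : aa < INR s.
Hypothesis HsuccT : aa / (4 * INR s) <= Rpower (INR n) (- c).
Hypothesis Hb1 : exp (aa - INR s * Rpower (INR n) (- c) / 2) + exp (- (aa / 8)) + INR ks / INR n <= bb.
Hypothesis Hb2 : exp (- (aa / 2)) <= bb.
Hypothesis Hks : 4 * INR s < 2 ^ ks.
Hypothesis Hks2 : (2 * ks <= n)%nat.

Lemma bb_pos : 0 < bb.
Proof. pose proof (exp_pos (- (aa/2))). lra. Qed.

Lemma gam_pow_pos t : 0 < gam ^ t.
Proof. apply pow_lt. unfold gam; lra. Qed.

Lemma two_pow_ge1 m : 1 <= 2 ^ m.
Proof. apply pow_R1_Rle. lra. Qed.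

Lemma Wf_bounds t k : 0 <= Wf bb ks t k <= 1.
Proof.
  unfold Wf. pose proof bb_pos. pose proof (gam_pow_pos t). pose proof (two_pow_ge1 (ks - k)).
  pose proof (pos_INR t). split.
  - apply Rmin_glb; [lra|]. nra.
  - apply Rmin_l.
Qed.

Lemma Wf_lin t k : Wf bb ks t k <= INR t * bb + gam ^ t * 2 ^ (ks - k).
Proof. apply Rmin_r. Qed.

Lemma V_bounds t st : 0 <= V t st <= 1.
Proof.
  destruct st as [[tr|]|X]; cbn [Vf].
  - destruct (clsb b n tr); [apply Wf_bounds|lra].
  - destruct t; [lra|apply Wf_bounds].
  - destruct (success n c h (Done X)); lra.
Qed.

Lemma V0 st : V 0 st = 1 - (if success n c h st then 1 else 0).
Proof.
  destruct st as [[tr|]|X]; cbn [Vf].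
  - replace (success n c h (Running (Some tr))) with false by reflexivity.
    destruct (clsb b n tr); [|lra]. unfold Wf. simpl. rewrite Rmult_0_l, Rplus_0_l, Rmult_1_l.
    unfold Rmin. pose proof (two_pow_ge1 (ks - nleaves tr)). destruct (Rle_dec _ _); lra.
  - replace (success n c h (Running None)) with false by reflexivity. lra.
  - destruct (success n c h (Done X)); lra.
Qed.

Lemma E_le1 {A} (d : Defs.dist A) f : valid d -> mass d = 1 -> (forall a, f a <= 1) -> E d f <= 1.
Proof. intros. apply E_le_const; auto. Qed.

Lemma E_ge0 {A} (d : Defs.dist A) f : valid d -> (forall a, 0 <= f a) -> 0 <= E d f.
Proof. intros. apply E_nonneg; auto. Qed.

Lemma step_le1 t st : E (rls_step n ell s c' h st) (V t) <= 1.
Proof. apply E_le1. apply valid_step. apply mass_step; auto. intro; apply V_bounds. Qed.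

Lemma step_None t : E (rls_step n ell s c' h (Running None)) (V t) <= V (S t) (Running None).
Proof.
  rewrite rls_step_E. change (V (S t) (Running None)) with (Wf bb ks t 1).
  apply E_le_const; [apply valid_ts|apply mass_ts|]. intros [w S] HS. cbn [snd].
  pose proof (ts_len n s (w, S) HS) as HL. cbn [snd] in HL.
  destruct (Rle_dec _ _) as [r|_].
  { exfalso. change (sampled_error h None S) with (length S) in r. rewrite HL in r. lra. }
  apply E_le_const.
  { apply valid_HVL. } { apply mass_HVL; auto. }
  intros [w' X'] HX. cbn [snd]. unfold HVL_Prime in HX.
  apply In_bind in HX. destruct HX as [[w1 op] [_ [pc [Hc HX]]]]. cbn [snd] in Hc, HX.
  apply In_bind in Hc. destruct Hc as [[w2 l] [Hl [pd [Hd Hc]]]]. cbn [snd] in Hd, Hc.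
  apply In_bind in Hd. destruct Hd as [[w3 g] [_ [pe [He Hd]]]]. cbn [snd] in He, Hd.
  destruct He as [<-|[]]. cbn [snd] in Hd. rewrite Hd in Hc. rewrite Hc in HX. cbn [snd] in HX. subst X'.
  apply In_unif in Hl. cbn [snd] in Hl. rewrite in_seq in Hl.
  unfold accst. change (LeafCount (Some (Leaf l))) with 1%nat. change (sampled_error h None S) with (length S).
  replace (Nat.leb 1 ell) with true by (symmetry; apply Nat.leb_le; lia).
  replace (Nat.leb (sampled_error h (Some (Leaf l)) S) (length S)) with true.
  2:{ symmetry. apply Nat.leb_le. unfold sampled_error. apply filter_length_le. }
  cbn [andb Vf]. replace (clsb b n (Leaf l)) with true. change (nleaves (Leaf l)) with 1%nat. lra.
  symmetry. apply clsb_spec. split; [exact I|split]. constructor; [intros []|constructor].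
  intros j [<-|[]]. lia.
Qed.

Lemma mass_unif_seq m : (1 <= m)%nat -> mass (unif (seq 0 m)) = 1.
Proof. intro; apply mass_unif, seq_nonnil; auto. Qed.

Lemma Eu_le_const {A} (l : list A) f C : l <> [] -> (forall a, In a l -> f a <= C) -> E (unif l) f <= C.
Proof. intros Hl H. apply E_le_const. apply valid_unif. apply mass_unif; auto.
  intros pa Hp. apply H. apply In_unif; auto. Qed.

Section Cls.
Variable tr : ptree.
Hypothesis Hc : cls b n tr.
Variable t : nat.
Local Notation k := (nleaves tr).
Local Notation Base := (INR t * bb + gam ^ t * 2 ^ (ks - k)).
Local Notation F := (fun X' => E (training_set n s) (fun S => V t (accst n ell h (Some tr) X' S))).

Lemma Vcls t0 tr0 : cls b n tr0 -> V t0 (Running (Some tr0)) = Wf bb ks t0 (nleaves tr0).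
Proof. intro H. cbn [Vf]. apply clsb_spec in H. rewrite H. auto. Qed.

Lemma F_le1 X' : F X' <= 1.
Proof. apply E_le1. apply valid_ts. apply mass_ts. intro; apply V_bounds. Qed.

Lemma F_neutral t' : cls b n t' -> nleaves t' = k -> F (Some t') <= Base.
Proof.
  intros Hc' Hk. apply E_le_const. apply valid_ts. apply mass_ts. intros [w S] _. cbn [snd].
  unfold accst. destruct (andb _ _); rewrite Vcls; auto; [rewrite Hk|]; apply Wf_lin.
Qed.

Lemma F_prog t' : cls b n t' -> nleaves t' = S k -> (k < ks)%nat ->
  (forall x, errf h (Some t') x = true -> errf h (Some tr) x = true) ->
  F (Some t') <= INR t * bb + gam ^ t * 2 ^ (ks - S k).
Proof.
  intros Hc' Hk Hks' Herr. apply E_le_const. apply valid_ts. apply mass_ts. intros [w S] _. cbn [snd].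
  unfold accst. replace (andb _ _) with true. rewrite Vcls; auto. rewrite Hk. apply Wf_lin.
  symmetry. apply andb_true_iff. split; apply Nat.leb_le.
  - simpl. rewrite Hk. destruct Hc' as [_ [H1 H2]]. pose proof (NoDup_lt_length _ n H1 H2).
    rewrite nleaves_leaves in Hk. lia.
  - rewrite !sampled_error_eq. apply cntS_mono. auto.
Qed.

Lemma F_worse X' W : aa / 4 < INR s * (/2) ^ k -> (/2) ^ (S k) <= qP n W ->
  (forall x, errf h (Some tr) x = true -> errf h X' x = true) ->
  (forall x, W x = true -> errf h X' x = true /\ errf h (Some tr) x = false) ->
  F X' <= Base + exp (- (aa / 8)).
Proof.
  intros HM HW H1 H2.
  apply Rle_trans with (E (training_set n s) (fun S => Base + indb (Nat.eqb (cntS W S) 0))).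
  - apply E_le. apply valid_ts. intros [w S] _. cbn [snd]. unfold accst.
    destruct (andb _ _) eqn:E1.
    + apply andb_true_iff in E1. destruct E1 as [_ E1]. apply Nat.leb_le in E1.
      rewrite !sampled_error_eq in E1. pose proof (acc_lemma h (Some tr) X' W S H1 H2).
      replace (Nat.eqb (cntS W S) 0) with true by (symmetry; apply Nat.eqb_eq; lia).
      unfold indb. pose proof (V_bounds t (Running X')). pose proof bb_pos.
      pose proof (gam_pow_pos t). pose proof (two_pow_ge1 (ks - k)). pose proof (pos_INR t). nra.
    + rewrite Vcls; auto. pose proof (Wf_lin t k). unfold indb. destruct (Nat.eqb _ _); lra.
  - rewrite E_plus, E_const, mass_ts, Rmult_1_r. apply Rplus_le_compat_l. 
    apply Rle_trans with (exp (- (INR s * qP n W))). apply tail_zero.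
    apply exp_le. simpl in HW. nra.
Qed.


Lemma k_lt_ks : aa / 4 < INR s * (/2) ^ k -> (k < ks)%nat.
Proof.
  intro HM. rewrite pow_inv in HM. assert (H2 : 0 < 2 ^ k) by (apply pow_lt; lra).
  assert (2 ^ k < 2 ^ ks).
  { apply Rmult_lt_reg_r with (/ 2 ^ k). apply Rinv_0_lt_compat; auto.
    rewrite Rinv_r by lra. apply Rle_lt_trans with (4 * INR s * / 2 ^ k - 4 * INR s * / 2^k + 1). lra.
    assert (1 < 4 * INR s * / 2 ^ k) by lra.
    assert (4 * INR s * / 2 ^ k < 2 ^ ks * / 2 ^ k).
    { apply Rmult_lt_compat_r; [apply Rinv_0_lt_compat; auto|lra]. }
    lra. }
  replace 2 with (INR 2) in H by (simpl; lra). rewrite <- !pow_INR in H. apply INR_lt in H.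
  apply Nat.pow_lt_mono_r_iff in H; lia.
Qed.

Definition inD (l : nat) : bool := if in_dec Nat.eq_dec l (leaves tr) then true else false.

Local Notation rho := (exp (- (aa / 8))).
Local Notation Dl := (gam ^ t * 2 ^ (ks - k) / 2).

Definition Gf (op l : nat) (g : bool) : R :=
  Base + rho + indb (inD l) - Dl * indb (Nat.eqb op 0) * indb (Bool.eqb g b) * (1 - indb (inD l)).

Lemma Base_nonneg : 0 <= Base.
Proof. pose proof bb_pos. pose proof (gam_pow_pos t). pose proof (two_pow_ge1 (ks - k)). pose proof (pos_INR t). nra. Qed.

Lemma Inner_le (HM : aa / 4 < INR s * (/2) ^ k) op l g : In op [0;1;2]%nat -> (l < n)%nat ->
    match op with
    | O => E (unif (seq 0 (nnodes tr))) (fun k' => E (unif [true;false]) (fun side => F (Some (modify_at tr k' (insf g l side)))))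
    | 1%nat => E (unif (seq 0 (nnodes tr))) (fun k' => F (del_at tr k'))
    | _ => E (unif (seq 0 (nleaves tr))) (fun j => F (Some (sub_leaf tr j l)))
    end <= Gf op l g.
Proof.
  intros Hop Hl. pose proof Base_nonneg. pose proof (exp_pos (- (aa/8))).
  pose proof (gam_pow_pos t). pose proof (two_pow_ge1 (ks - k)).
  pose proof (k_lt_ks HM) as Hkk.
  assert (Hnn : seq 0 (nnodes tr) <> []) by apply seq_nonnil, nnodes_pos.
  assert (Hnl : seq 0 (nleaves tr) <> []) by apply seq_nonnil, nleaves_pos.
  unfold Gf, inD. destruct (in_dec Nat.eq_dec l (leaves tr)) as [Hin|Hnin].
  - unfold indb at 1 4. replace (1 - 1) with 0 by lra. rewrite Rmult_0_r, Rminus_0_r.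
    apply Rle_trans with 1; [|lra].
    destruct op as [|[|]]; (apply Eu_le_const; auto; intros; try (apply Eu_le_const; [discriminate|intros]); apply F_le1).
  - unfold indb at 1 4. replace (1 - 0) with 1 by lra. rewrite Rmult_1_r, Rplus_0_r.
    destruct op as [|[|[|]]]; [| | |simpl in Hop; lia].
    + apply Eu_le_const; auto. intros k' Hk'. apply Eu_le_const; [discriminate|]. intros side _.
      rewrite in_seq in Hk'. destruct (Bool.eqb_spec g b) as [->|Hg].
      * destruct (ins_prog b n tr k' l side Hc Hnin Hl ltac:(lia)) as [C1 [C2 C3]].
        eapply Rle_trans. apply F_prog; eauto.
        replace (2 ^ (ks - k)) with (2 * 2 ^ (ks - S k)).
        2:{ replace (ks - k)%nat with (S (ks - S k)) by lia. reflexivity. }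
        unfold indb. simpl. lra.
      * replace g with (negb b) by (destruct g, b; simpl in *; congruence || tauto).
        destruct (ins_or b n tr k' l side Hc Hnin Hl ltac:(lia)) as [W [W1 [W2 W3]]].
        eapply Rle_trans. apply (F_worse _ W); eauto. unfold indb. simpl.
        destruct (Bool.eqb (negb b) b); lra.
    + apply Eu_le_const; auto. intros k' Hk'. rewrite in_seq in Hk'.
      destruct (del_lem b n tr k' Hc ltac:(lia)) as [W [W1 [W2 W3]]].
      eapply Rle_trans. apply (F_worse _ W); eauto. unfold indb. simpl. lra.
    + apply Eu_le_const; auto. intros j _.
      destruct (sub_lem b n tr j l Hc Hnin Hl) as [S1 S2].
      eapply Rle_trans. apply F_neutral; eauto. unfold indb. simpl. lra.
Qed.


Lemma E_inD : E (unif (seq 0 n)) (fun l => indb (inD l)) = INR k / INR n.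
Proof.
  rewrite E_unif, sumf_indb, length_seq. rewrite (filter_seq_len inD n (leaves tr)).
  - rewrite nleaves_leaves. unfold Rdiv. apply Rmult_comm.
  - apply Hc.
  - apply Hc.
  - intros j _. unfold inD. destruct (in_dec _ _ _); split; auto; discriminate.
Qed.

Lemma avg_G : E (unif [0;1;2]%nat) (fun op => E (unif (seq 0 n)) (fun l => E (unif [true;false]) (fun g => Gf op l g)))
   = Base + rho + INR k / INR n - Dl / 6 * (1 - INR k / INR n).
Proof.
  assert (Hg : forall op l, E (unif [true;false]) (fun g => Gf op l g) =
     (Base + rho - Dl * indb (Nat.eqb op 0) / 2) + (1 + Dl * indb (Nat.eqb op 0) / 2) * indb (inD l)).
  { intros op l. rewrite E_unif. cbn [sumf fold_right length INR]. unfold Gf.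
    destruct b, (inD l), (Nat.eqb op 0); unfold indb; simpl; field. }
  rewrite E_unif. cbn [sumf fold_right length INR]. rewrite !(E_ext _ _ _ (Hg _)).
  rewrite !E_plus, !E_const, !E_scal, mass_unif_seq, E_inD by auto. simpl. unfold indb. simpl. field.
  apply not_0_INR. lia.
Qed.

Lemma step_cls : E (rls_step n ell s c' h (Running (Some tr))) (V t) <= V (S t) (Running (Some tr)).
Proof.
  rewrite (Vcls (S t) tr Hc). unfold Wf at 1. apply Rmin_glb; [apply step_le1|].
  rewrite rls_step_E.
  set (q := qP n (errf h (Some tr))).
  pose proof (q_class_le b n tr Hc) as Hq. fold q in Hq.
  assert (Hs0 : 0 < INR s) by lra.
  assert (HT : forall S, E (HVL_Prime n (Some tr)) (fun X' => V t (accst n ell h (Some tr) X' S)) <= 1).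
  { intro S. apply E_le1. apply valid_HVL. apply mass_HVL; auto. intro; apply V_bounds. }
  assert (HNN : forall S, 0 <= E (HVL_Prime n (Some tr)) (fun X' => V t (accst n ell h (Some tr) X' S))).
  { intro S. apply E_ge0. apply valid_HVL. intro; apply V_bounds. }
  pose proof (gam_pow_pos t). pose proof (two_pow_ge1 (ks - k)). pose proof bb_pos. pose proof (pos_INR t).
  rewrite S_INR.
  destruct (Rle_dec (INR s * q) (aa / 4)) as [HTr|HM].
  - (* termination regime *)
    assert (Hsucc : success n c h (Done (Some tr)) = true).
    { unfold success. rewrite gen_error_eq. fold q. destruct (Rle_dec q _) as [|Hn]; auto. exfalso. apply Hn.
      eapply Rle_trans; [|apply HsuccT]. apply Rmult_le_reg_l with (4 * INR s). lra.
      replace (4 * INR s * (aa / (4 * INR s))) with aa by (field; lra). lra. }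
    apply Rle_trans with (E (training_set n s) (fun S => if Rle_dec (INR (cntS (errf h (Some tr)) S)) aa then 0 else 1)).
    + apply E_le. apply valid_ts. intros [w S] _. cbn [snd]. rewrite sampled_error_eq.
      destruct (Rle_dec _ _). cbn [Vf]. rewrite Hsucc. lra. apply HT.
    + eapply Rle_trans. apply tail_upper. fold q.
      apply Rle_trans with bb; [|pose proof (gam_pow_pos (S t)); nra]. eapply Rle_trans; [|apply Hb2]. apply exp_le. lra.
  - (* progress regime *)
    apply Rnot_le_lt in HM.
    assert (HM' : aa / 4 < INR s * (/2) ^ k) by nra.
    pose proof (k_lt_ks HM') as Hkk.
    apply Rle_trans with (E (training_set n s) (fun S =>
        V t (Done (Some tr)) * indb (if Rle_dec (INR (cntS (errf h (Some tr)) S)) aa then true else false)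
        + E (HVL_Prime n (Some tr)) (fun X' => V t (accst n ell h (Some tr) X' S)))).
    { apply E_le. apply valid_ts. intros [w S] _. cbn [snd]. rewrite sampled_error_eq.
      pose proof (V_bounds t (Done (Some tr))). pose proof (HNN S).
      destruct (Rle_dec _ _); unfold indb; lra. }
    rewrite E_plus, E_scal, E_swap.
    assert (HA1 : V t (Done (Some tr)) * E (training_set n s)
       (fun S => indb (if Rle_dec (INR (cntS (errf h (Some tr)) S)) aa then true else false))
       <= exp (aa - INR s * Rpower (INR n) (- c) / 2)).
    { cbn [Vf]. destruct (success n c h (Done (Some tr))) eqn:Es.
      - rewrite Rmult_0_l. left; apply exp_pos.
      - rewrite Rmult_1_l. unfold success in Es. rewrite gen_error_eq in Es. fold q in Es.
        destruct (Rle_dec q _) as [|Hq2]; [discriminate|]. apply Rnot_le_lt in Hq2.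
        eapply Rle_trans.
        + replace (E (training_set n s) _) with
            (E (training_set n s) (fun S => if Rle_dec (INR (cntS (errf h (Some tr)) S)) aa then 1 else 0)).
          apply tail_lower. apply E_ext. intro S. destruct (Rle_dec _ _); auto.
        + fold q. apply exp_le. nra. }
    assert (HA2 : E (HVL_Prime n (Some tr)) (fun X' => E (training_set n s) (fun S => V t (accst n ell h (Some tr) X' S)))
         <= Base + rho + INR k / INR n - Dl / 6 * (1 - INR k / INR n)).
    { rewrite E_HVL_Some, <- avg_G. apply E_le. apply valid_unif. intros [w op] Hop. cbn [snd].
      apply In_unif in Hop. cbn [snd] in Hop.
      apply E_le. apply valid_unif. intros [w' l] Hl. cbn [snd]. apply In_unif in Hl. cbn [snd] in Hl.
      rewrite in_seq in Hl.
      apply E_le. apply valid_unif. intros [w'' g] _. cbn [snd].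
      apply Inner_le; auto. lia. }
    assert (Hkn : INR k / INR n <= / 2).
    { assert (0 < INR n) by (apply lt_0_INR; lia). apply Rmult_le_reg_r with (INR n); auto.
      unfold Rdiv. rewrite Rmult_assoc, Rinv_l by lra. assert (2 * INR k <= INR n).
      { replace 2 with (INR 2) by (simpl; lra). rewrite <- mult_INR. apply le_INR. lia. } lra. }
    assert (Hkn2 : INR k / INR n <= INR ks / INR n).
    { unfold Rdiv. apply Rmult_le_compat_r. left; apply Rinv_0_lt_compat, lt_0_INR; lia.
      apply le_INR; lia. }
    assert (0 <= INR k / INR n).
    { unfold Rdiv. apply Rmult_le_pos. apply pos_INR. left; apply Rinv_0_lt_compat, lt_0_INR; lia. }
    change (gam ^ S t) with (gam * gam ^ t). unfold gam in *.
    set (P := (23/24) ^ t * 2 ^ (ks - k)) in *.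
    assert (0 < P) by (unfold P; nra).
    assert (P / 2 / 6 * (1 - INR k / INR n) >= P / 24) by nra.
    replace ((23/24) * (23/24) ^ t * 2 ^ (ks - k)) with (23/24 * P) by (unfold P; ring).
    lra.
Qed.

End Cls.

Lemma step_all t st : E (rls_step n ell s c' h st) (V t) <= V (S t) st.
Proof.
  destruct st as [[tr|]|X].
  - destruct (clsb b n tr) eqn:Ec.
    + apply step_cls. apply clsb_spec; auto.
    + cbn [Vf]. rewrite Ec. apply step_le1.
  - apply step_None.
  - cbn [rls_step]. rewrite E_ret. cbn [Vf]. lra.
Qed.

Lemma final_bound T : prob (rls_run n ell s c' h T) (success n c h) >= 1 - V T (Running None).
Proof.
  pose proof (run_bound n ell s c' h V step_all T 0) as H. rewrite Nat.add_0_l in H.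
  rewrite prob_E. apply Rle_ge.
  assert (E (rls_run n ell s c' h T) (V 0) = 1 - E (rls_run n ell s c' h T) (fun a => if success n c h a then 1 else 0)).
  { rewrite (E_ext _ _ _ V0). unfold Rminus. rewrite E_plus, E_opp, E_const, mass_run by auto. lra. }
  lra.
Qed.

End Main.

From Stdlib Require Import Reals Lra Lia List Arith ZArith.
Open Scope R_scope.

Lemma ln2_bounds : / 2 < ln 2 < 1.
Proof.
  split. apply ln_lt_2. rewrite <- ln_exp with 1. apply ln_increasing. lra.
  pose proof (exp_ineq1 1 ltac:(lra)). lra.
Qed.

Lemma ln_lt_self x : 0 < x -> ln x < x.
Proof. intro H. rewrite <- (ln_exp x) at 2. apply ln_increasing; auto.
  pose proof (exp_ineq1_le x). lra. Qed.

Lemma ln_lt_2sqrt x : 0 < x -> ln x < 2 * sqrt x.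
Proof.
  intro H. assert (Hs : 0 < sqrt x) by (apply sqrt_lt_R0; auto).
  rewrite <- (sqrt_sqrt x) at 1 by lra. rewrite ln_mult by auto.
  pose proof (ln_lt_self _ Hs). lra.
Qed.

Lemma exp_neg_ln x L : 0 < x -> ln x <= L -> exp (- L) <= / x.
Proof. intros H1 H2. replace (/ x) with (exp (- ln x)). apply exp_le. lra.
  rewrite exp_Ropp, exp_ln; auto. Qed.

Lemma ceil_bounds x : 0 <= x -> x <= INR (Z.to_nat (ceilR x)) < x + 1.
Proof.
  intro Hx. unfold ceilR. destruct (base_Int_part (- x)) as [H1 H2].
  assert (Hz : (0 <= - Int_part (- x))%Z).
  { apply le_IZR. rewrite opp_IZR. lra. }
  rewrite INR_IZR_INZ, Z2Nat.id by auto. rewrite opp_IZR. lra.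
Qed.

Lemma gam_pow_le m : gam ^ m <= exp (- (INR m / 24)).
Proof.
  replace (- (INR m / 24)) with (INR m * (- (1/24))) by lra. rewrite <- exp_pow.
  apply pow_incr. unfold gam. split. lra. pose proof (exp_ineq1_le (- (1/24))). lra.
Qed.

Lemma Rpower_ge1 x c : 1 <= x -> 0 < c -> 1 <= Rpower x c.
Proof. intros H1 H2. unfold Rpower. rewrite <- exp_0. apply exp_le.
  assert (0 <= ln x). { destruct (Req_dec x 1). subst; rewrite ln_1; lra. left. rewrite <- ln_1. apply ln_increasing; lra. }
  nra. Qed.

Lemma ln_le x y : 0 < x -> x <= y -> ln x <= ln y.
Proof. intros H1 H2. destruct (Req_dec x y). subst; lra. left; apply ln_increasing; lra. Qed.

Lemma INR2 : INR 2 = 2.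
Proof. simpl; lra. Qed.

Lemma main_b c b n ell : 0 < c ->
  (2^18 + Z.to_nat (up (64 * (c + 5)^2)) <= n)%nat -> (n <= ell)%nat ->
  prob (rls_run n ell (sample_size n c) 8 (hb b n) (Z.to_nat (Int_part (24 * (c + 3) * lg (INR n)))))
       (success n c (hb b n))
   >= 1 - (24 * (c + 3) * (c + 5 + 1) + 1) * lg (INR n) ^ 2 / INR n.
Proof.
  intros Hc HN Hell.
  set (c1 := c + 5). set (K := 24 * (c + 3)).
  set (N := INR n). set (L := lg N). set (s := sample_size n c). set (P := Rpower N c).
  pose proof ln2_bounds as Hln2.
  assert (HN18 : 2 ^ 18 <= N).
  { unfold N. rewrite <- INR2, <- pow_INR. apply le_INR. lia. }
  assert (HNc : 64 * c1 ^ 2 < N).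
  { unfold N. destruct (archimed (64 * c1 ^ 2)) as [A1 _].
    assert (0 < 64 * c1 ^ 2) by (unfold c1; nra).
    assert (Hup : (0 <= up (64 * c1 ^ 2))%Z) by (apply le_IZR; lra).
    eapply Rlt_le_trans. apply A1. rewrite <- (Z2Nat.id _ Hup), <- INR_IZR_INZ.
    apply le_INR. unfold c1. lia. }
  assert (HN0 : 0 < N) by lra.
  assert (Hn1 : (1 <= n)%nat).
  { apply INR_le. fold N. simpl. lra. }
  assert (HlnN : 18 * ln 2 <= ln N).
  { replace (18 * ln 2) with (ln (2 ^ 18)). apply ln_le; auto. apply pow_lt; lra.
    rewrite ln_pow by lra. simpl. lra. }
  assert (HL18 : 18 <= L).
  { unfold L, lg. apply Rmult_le_reg_r with (ln 2). lra. unfold Rdiv. rewrite Rmult_assoc, Rinv_l; lra. }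
  assert (HLdef : L * ln 2 = ln N).
  { unfold L, lg. field. lra. }
  assert (HLln : ln N <= L) by nra.
  assert (HL2 : L <= 2 * ln N) by nra.
  assert (HLsq : L < 4 * sqrt N) by (pose proof (ln_lt_2sqrt N HN0); lra).
  assert (HP1 : 1 <= P) by (apply Rpower_ge1; lra).
  assert (Hs : P * L ^ 2 <= INR s < P * L ^ 2 + 1).
  { unfold s, sample_size. fold N. fold L. fold P. apply ceil_bounds. nra. }
  assert (HL2s : L ^ 2 <= P * L ^ 2) by nra.
  assert (Hs_pos : (0 < 4 * s)%nat).
  { assert (0 < INR s) by nra. apply INR_lt. rewrite mult_INR. simpl. lra. }
  set (ks := S (Nat.log2 (4 * s))).
  destruct (Nat.log2_spec (4 * s) Hs_pos) as [Hl1 Hl2].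
  assert (Hks : 4 * INR s < 2 ^ ks).
  { apply lt_INR in Hl2. rewrite mult_INR, pow_INR, INR2 in Hl2. simpl (INR 4) in Hl2. fold ks in Hl2. lra. }
  assert (H2ks : 2 ^ ks <= 8 * INR s).
  { apply le_INR in Hl1. rewrite mult_INR, pow_INR, INR2 in Hl1. simpl (INR 4) in Hl1.
    unfold ks. rewrite <- tech_pow_Rmult. lra. }
  assert (Hks_hi : INR ks <= c1 * L).
  { assert (Hm : INR (Nat.log2 (4 * s)) * ln 2 <= ln (8 * P * L ^ 2)).
    { rewrite <- (ln_pow 2) by lra. apply ln_le. apply pow_lt; lra.
      apply le_INR in Hl1. rewrite mult_INR, pow_INR, INR2 in Hl1. simpl (INR 4) in Hl1. nra. }
    assert (HP0 : 0 < P) by lra.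
    rewrite !ln_mult in Hm by (try apply pow_lt; nra).
    rewrite ln_pow in Hm by lra.
    replace 8 with (2 ^ 3) in Hm by (simpl; lra). rewrite ln_pow in Hm by lra.
    unfold P, Rpower in Hm. rewrite ln_exp in Hm.
    pose proof (ln_lt_self L ltac:(lra)).
    assert (INR (Nat.log2 (4 * s)) <= 3 + c * L + 4 * L).
    { apply Rmult_le_reg_r with (ln 2). lra. rewrite <- HLdef in Hm.
      assert (ln L <= 2 * L * ln 2 ). { nra. } rewrite INR2 in Hm. replace (INR 3) with 3 in Hm by (simpl; lra). nra. }
    unfold ks. rewrite S_INR. unfold c1. nra. }
  assert (Hks2 : (2 * ks <= n)%nat).
  { apply INR_le. rewrite mult_INR. fold N. rewrite INR2.
    assert (Hsq : 0 <= sqrt N) by apply sqrt_pos.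
    assert (HsqN : sqrt N * sqrt N = N) by (apply sqrt_sqrt; lra).
    assert (8 * c1 < sqrt N) by (unfold c1 in *; nra).
    unfold c1 in *. nra. }
  set (bb := (2 + INR ks) / N).
  assert (HexpL : exp (- L) <= / N) by (apply exp_neg_ln; lra).
  assert (HinvN : 0 < / N) by (apply Rinv_0_lt_compat; lra).
  assert (Ha1 : 1 <= 8 * L) by lra.
  assert (Hsa : 8 * L < INR s) by nra.
  assert (HsuccT : 8 * L / (4 * INR s) <= Rpower N (- c)).
  { rewrite Rpower_Ropp. fold P. apply Rmult_le_reg_r with (4 * INR s * P). nra.
    replace (8 * L / (4 * INR s) * (4 * INR s * P)) with (8 * L * P) by (field; nra).
    replace (/ P * (4 * INR s * P)) with (4 * INR s) by (field; lra). nra. }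
  assert (Hb1 : exp (8 * L - INR s * Rpower N (- c) / 2) + exp (- (8 * L / 8)) + INR ks / N <= bb).
  { rewrite Rpower_Ropp. fold P.
    assert (L ^ 2 <= INR s * / P).
    { apply Rmult_le_reg_r with P. lra. rewrite Rmult_assoc, Rinv_l by lra. lra. }
    assert (exp (8 * L - INR s * / P / 2) <= exp (- L)) by (apply exp_le; nra).
    replace (- (8 * L / 8)) with (- L) by lra. unfold bb. unfold Rdiv. lra. }
  assert (Hb2 : exp (- (8 * L / 2)) <= bb).
  { assert (exp (- (8 * L / 2)) <= exp (- L)) by (apply exp_le; lra).
    unfold bb. unfold Rdiv. assert (0 <= INR ks * / N) by (apply Rmult_le_pos; [apply pos_INR|lra]). lra. }
  pose proof (final_bound n ell s c 8 b ks bb Hn1 Hell Ha1 Hsa HsuccT Hb1 Hb2 Hks Hks2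
                (Z.to_nat (Int_part (K * L)))) as HF.
  fold N L. apply Rge_trans with (1 - Vf n c b ks bb (Z.to_nat (Int_part (K * L))) (Running None)); auto.
  apply Rle_ge. apply Rplus_le_compat_l. apply Ropp_le_contravar.
  destruct (base_Int_part (K * L)) as [I1 I2].
  assert (HKL : 100 <= K * L) by (unfold K; nra).
  assert (HI : (1 <= Int_part (K * L))%Z) by (apply le_IZR; lra).
  assert (HT : INR (Z.to_nat (Int_part (K * L))) = IZR (Int_part (K * L))).
  { rewrite INR_IZR_INZ, Z2Nat.id by lia. auto. }
  destruct (Z.to_nat (Int_part (K * L))) as [|T'] eqn:ET.
  { simpl in HT. lra. }
  rewrite S_INR in HT.
  cbn [Vf]. eapply Rle_trans. apply Wf_lin.
  assert (HbbL : bb <= (c1 + 1) * L / N).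
  { unfold bb. unfold Rdiv. apply Rmult_le_compat_r; lra. }
  assert (Hbb0 : 0 <= bb) by (unfold bb; unfold Rdiv; apply Rmult_le_pos; [pose proof (pos_INR ks); lra|lra]).
  assert (HT1 : INR T' * bb <= K * (c1 + 1) * L ^ 2 / N).
  { apply Rle_trans with (K * L * ((c1 + 1) * L / N)).
    apply Rmult_le_compat; auto. apply pos_INR. lra. unfold Rdiv. nra. }
  assert (HT2 : gam ^ T' * 2 ^ (ks - 1) <= L ^ 2 / N).
  { pose proof (gam_pow_le T').
    assert (exp (- (INR T' / 24)) <= exp (1/12) * exp (- ((c + 3) * ln N))).
    { rewrite <- exp_plus. apply exp_le. unfold K in *. nra. }
    assert (2 ^ (ks - 1) <= 16 * P * L ^ 2).
    { apply Rle_trans with (2 ^ ks). apply Rle_pow. lra. lia. nra. }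
    assert (exp (1/12) <= 3). { pose proof exp_le_3. assert (exp (1/12) <= exp 1) by (apply exp_le; lra). lra. }
    assert (HPe : P = exp (c * ln N)) by reflexivity.
    assert (HEq : exp (- ((c + 3) * ln N)) * P = / (N * N * N)).
    { rewrite HPe, <- exp_plus. replace (- ((c + 3) * ln N) + c * ln N) with (- (INR 3 * ln N)) by (simpl; lra).
      rewrite exp_Ropp, <- exp_pow, exp_ln by lra. simpl. f_equal. ring. }
    assert (0 < gam ^ T') by apply (gam_pow_pos).
    assert (0 < 2 ^ (ks - 1)) by (apply pow_lt; lra).
    apply Rle_trans with (exp (1/12) * exp (- ((c + 3) * ln N)) * (16 * P * L ^ 2)).
    { apply Rmult_le_compat; lra. }
    replace (exp (1 / 12) * exp (- ((c + 3) * ln N)) * (16 * P * L ^ 2)) with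
      (16 * exp (1/12) * L ^ 2 * (exp (- ((c + 3) * ln N)) * P)) by ring.
    rewrite HEq. assert (48 <= N * N) by nra. unfold Rdiv.
    apply Rle_trans with (48 * L ^ 2 * / (N * N * N)).
    { apply Rmult_le_compat_r. left; apply Rinv_0_lt_compat; nra. nra. }
    replace (48 * L ^ 2 * / (N * N * N)) with (L ^ 2 * / N * (48 / (N * N))) by (field; lra).
    assert (48 / (N * N) <= 1). { apply Rmult_le_reg_r with (N * N). nra. unfold Rdiv. rewrite Rmult_assoc, Rinv_l by nra. lra. }
    assert (0 <= L ^ 2 * / N) by nra. nra. }
  unfold Rdiv in *. lra.
Qed.


Theorem theorem8 :
  forall c : R, 0 < c ->
  exists c' : R, 0 < c' /\
  exists K C : R, 0 < K /\ 0 < C /\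
  exists N0 : nat,
  forall n ell : nat, (N0 <= n)%nat -> (n <= ell)%nat ->
  forall h : list bool -> bool, h = AND_n n \/ h = OR_n n ->
    prob (rls_run n ell (sample_size n c) c' h
                  (Z.to_nat (Int_part (K * lg (INR n)))))
         (success n c h)
    >= 1 - C * (lg (INR n)) ^ 2 / INR n.
Proof.
  intros c Hc. exists 8. split; [lra|].
  exists (24 * (c + 3)), (24 * (c + 3) * (c + 5 + 1) + 1). split; [nra|]. split; [nra|].
  exists (2^18 + Z.to_nat (up (64 * (c + 5)^2)))%nat. intros n ell HN Hell h Hh.
  destruct Hh as [-> | ->].
  - change (AND_n n) with (hb true n). apply main_b; auto.
  - change (OR_n n) with (hb false n). apply main_b; auto.
Qed.
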